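(* There is an absolute constant $c>0$ such that for all positive integers $n,m$, every set $\mathcal{S}$, every relation $f\subseteq\{0,1\}^n\times\mathcal{S}$ and every partial Boolean function $g\subseteq\{0,1\}^m\times\{0,1\}$ with $g^{-1}(0)\neq\emptyset\neq g^{-1}(1)$, \[\mathrm{R}_{1/3}(f\circ g^n)\;\ge\; c\cdot\mathrm{R}_{4/9}(f)\cdot\chi(g).\]
   Context: A partial Boolean function is a relation $g\subseteq\{0,1\}^m\times\{0,1\}$. For $b\in\{0,1\}$, $g^{-1}(b)$ is the set of $x\in\{0,1\}^m$ with $(x,b)\in g$ and $(x,1-b)\notin g$; every string outside $g^{-1}(0)\cup g^{-1}(1)$ is related by $g$ to both $0$ and $1$. For a relation $h\subseteq\{0,1\}^k\times\mathcal{S}$ and $\epsilon\in[0,1/2)$, $\mathrm{R}_\epsilon(h)$ is the minimum worst-case number of queries (over inputs and internal randomness) of a randomized query algorithm $\mathcal{A}$ with $\Pr[(x,\mathcal{A}(x))\in h]\ge1-\epsilon$ for every $x\in\{0,1\}^k$. Composition: $f\circ g^n\subseteq(\{0,1\}^m)^n\times\mathcal{S}$ is defined by $(x,s)\in f\circ g^n$ iff there exists $b\in\{0,1\}^n$ with $(x^{(i)},b^{(i)})\in g$ for all $i$ and $(b,s)\in f$. A (deterministic) decision tree on $(\{0,1\}^m)^n$ is a rooted binary tree in which each internal vertex queries some input bit $x_i^{(j)}$ ($x=(x_1,\dots,x_n)$, $x_i=(x_i^{(1)},\dots,x_i^{(m)})\in\{0,1\}^m$) and has children $v_0,v_1$ corresponding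 to query outcomes $0,1$. Each vertex $v$ is identified with the subcube of inputs whose computation reaches $v$; write $v=\times_{i=1}^n v^{(i)}$ with $v^{(i)}\subseteq\{0,1\}^m$. For $n=1$, a decision tree $\mathcal{B}$ computes $g$ if its leaves are labelled by bits and for every valid input $x$ the label of the leaf reached equals the unique $b$ with $x\in g^{-1}(b)$. Process $\mathcal{P}$ on $(\mathcal{B},\mu_0,\mu_1,z)$, where $\mathcal{B}$ is a decision tree on $(\{0,1\}^m)^n$, $\mu_0,\mu_1$ are probability distributions on $\{0,1\}^m$ and $z\in\{0,1\}^n$: initialize $\mathsf{NQ}_k\gets1$ and $\mathsf{N}_k\gets0$ for all $k$, and $v\gets$ root. While $v$ is not a leaf, let $x_i^{(j)}$ be the bit queried at $v$ and, for $b\in\{0,1\}$, let $p_b=\Pr_{y\sim\mu_b}[y^{(j)}=0\mid y\in v^{(i)}]$. If $\mathsf{NQ}_i=1$: sample a fresh uniform real $r\in[0,1]$; if $r\le\min_b p_b$ set $v\gets v_0$; else if $r\ge\max_b p_b$ set $v\gets v_1$; otherwise set $\mathsf{NQ}_i\gets0$ and set $v\gets v_0$ if $r\le p_{z_i}$ and $v\gets v_1$ otherwise; in all three cases then set $\mathsf{N}_i\gets\mathsf{N}_i+1$. If $\mathsf{NQ}_i=0$: sample $y\sim\mu_{z_i}$ conditioned on $y\in v^{(i)}$ and set $v\gets v_{y^{(j)}}$. Conflict complexity: let $\mu_0,\mu_1$ be distributions supported on $g^{-1}(0)$ and $g^{-1}(1)$ respectively, and $\mathcal{B}$ a decision tree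 on $\{0,1\}^m$ (i.e. $n=1$) computing $g$. Run $\mathcal{P}$ on $(\mathcal{B},\mu_0,\mu_1,z)$ with $z\in\{0,1\}$ and let $\mathcal{N}$ be the final value of $\mathsf{N}_1$ (its distribution does not depend on $z$). Define $\chi(\mu_0,\mu_1,\mathcal{B})=\mathbb{E}[\mathcal{N}]$ and \[\chi(g)=\max_{\mu_0,\mu_1}\ \min_{\mathcal{B}}\ \chi(\mu_0,\mu_1,\mathcal{B}),\] the maximum over pairs of distributions supported on $g^{-1}(0)$ and $g^{-1}(1)$ respectively, the minimum over decision trees computing $g$. *)

(* Defs.v *)
From Stdlib Require Import Reals List Classical ClassicalEpsilon.
Import ListNotations.
Open Scope R_scope.

Inductive DT (Q L : Type) : Type :=
| Leaf : L -> DT Q L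
| Node : Q -> DT Q L -> DT Q L -> DT Q L.
Arguments Leaf {Q L} _.
Arguments Node {Q L} _ _ _.

Fixpoint run {X Q L : Type} (ask : X -> Q -> bool) (T : DT Q L) (x : X) : L :=
  match T with
  | Leaf l => l
  | Node q t0 t1 => if ask x q then run ask t1 x else run ask t0 x
  end.

Fixpoint nqueries {X Q L : Type} (ask : X -> Q -> bool) (T : DT Q L) (x : X) : nat :=
  match T with
  | Leaf _ => 0%nat
  | Node q t0 t1 => S (if ask x q then nqueries ask t1 x else nqueries ask t0 x)
  end.

Definition sumR (l : list R) : R := fold_right Rplus 0 l.
Definition ind (P : Prop) : R := if excluded_middle_informative P then 1 else 0.

(* a randomized algorithm = finitely supported probability distribution over
   deterministic decision trees *)
Definition RandAlg (Q L : Type) := list (R * DT Q L).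

Definition is_prob_dist {A : Type} (D : list (R * A)) : Prop :=
  Forall (fun p => 0 <= fst p) D /\ sumR (map fst D) = 1.

Definition success_prob {X Q S : Type} (ask : X -> Q -> bool)
  (h : X -> S -> Prop) (A : RandAlg Q S) (x : X) : R :=
  sumR (map (fun p => fst p * ind (h x (run ask (snd p) x))) A).

Definition achieves {X Q S : Type} (ask : X -> Q -> bool) (valid : X -> Prop)
  (h : X -> S -> Prop) (eps : R) (d : nat) : Prop :=
  exists A : RandAlg Q S,
    is_prob_dist A /\
    (forall p, In p A -> forall x, valid x -> (nqueries ask (snd p) x <= d)%nat) /\
    (forall x, valid x -> success_prob ask h A x >= 1 - eps).

Definition is_Rcomplexity {X Q S : Type} (ask : X -> Q -> bool) (valid : X -> Prop)
  (h : X -> S -> Prop) (eps : R) (r : nat) : Prop :=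
  achieves ask valid h eps r /\ (forall d, achieves ask valid h eps d -> (r <= d)%nat).

(* {0,1}^k = lists of booleans of length k; position i is queried via nth *)
Definition ask_bits (x : list bool) (i : nat) : bool := nth i x false.
Definition bits (k : nat) (x : list bool) : Prop := length x = k.

(* ({0,1}^m)^n = lists of n lists of length m; query (i,j) = x_i^(j) *)
Definition ask_blocks (x : list (list bool)) (q : nat * nat) : bool :=
  nth (snd q) (nth (fst q) x nil) false.
Definition blocks (n m : nat) (x : list (list bool)) : Prop :=
  length x = n /\ Forall (fun y => length y = m) x.

Fixpoint allbits (k : nat) : list (list bool) :=
  match k with
  | O => [nil]
  | S k' => flat_map (fun y => [false :: y; true :: y]) (allbits k')
  end.

Definition ginv (g : list bool -> bool -> Prop) (b : bool) (x : list bool) : Prop :=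
  g x b /\ ~ g x (negb b).

(* g is a partial Boolean function on {0,1}^m: every string outside
   g^{-1}(0) u g^{-1}(1) is related to both 0 and 1 *)
Definition partial_bool (g : list bool -> bool -> Prop) (m : nat) : Prop :=
  forall x, length x = m -> ~ ginv g false x -> ~ ginv g true x -> g x false /\ g x true.

Definition compose {S : Type} (n : nat) (f : list bool -> S -> Prop)
  (g : list bool -> bool -> Prop) (x : list (list bool)) (s : S) : Prop :=
  exists b : list bool, length b = n /\
    (forall i, (i < n)%nat -> g (nth i x nil) (nth i b false)) /\ f b s.

Definition mass (m : nat) (mu : list bool -> R) (C : list bool -> Prop) : R :=
  sumR (map (fun y => mu y * ind (C y)) (allbits m)).

(* Pr_{y ~ mu}[y^(j) = 0 | y in C]  (convention: 0 if mu(C) = 0) *)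
Definition cond_prob0 (m : nat) (mu : list bool -> R) (C : list bool -> Prop) (j : nat) : R :=
  let den := mass m mu C in
  if Req_EM_T den 0 then 0
  else mass m mu (fun y => C y /\ nth j y false = false) / den.

(* Expected final value of N_1 for process P on (T, mu0, mu1, z), started at
   the vertex whose subcube is C with current flag NQ_1 = nq (n = 1).
   The uniform real r is integrated out: from a vertex querying x^(j),
   with lo = min_b p_b, hi = max_b p_b:
     NQ=1: r<=lo (prob lo) -> v0, NQ stays 1;  r>=hi (prob 1-hi) -> v1, NQ 1;
           lo<r<=p_z (prob p_z-lo) -> v0, NQ:=0;  p_z<r<hi (prob hi-p_z) -> v1, NQ:=0;
           in all cases N increases by 1.
     NQ=0: y ~ mu_z | v, go to v0 with prob p_z, v1 with prob 1-p_z; N unchanged. *)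
Fixpoint EN (m : nat) (mu0 mu1 : list bool -> R) (z : bool)
  (C : list bool -> Prop) (T : DT nat bool) (nq : bool) : R :=
  match T with
  | Leaf _ => 0
  | Node j t0 t1 =>
      let C0 := fun y => C y /\ nth j y false = false in
      let C1 := fun y => C y /\ nth j y false = true in
      let p0 := cond_prob0 m mu0 C j in
      let p1 := cond_prob0 m mu1 C j in
      let pz := if z then p1 else p0 in
      let lo := Rmin p0 p1 in
      let hi := Rmax p0 p1 in
      if nq then
        1 + lo * EN m mu0 mu1 z C0 t0 true
          + (1 - hi) * EN m mu0 mu1 z C1 t1 true
          + (pz - lo) * EN m mu0 mu1 z C0 t0 false
          + (hi - pz) * EN m mu0 mu1 z C1 t1 false
      else
        pz * EN m mu0 mu1 z C0 t0 false + (1 - pz) * EN m mu0 mu1 z C1 t1 false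
  end.

(* chi(mu0, mu1, B) = E[N], process run with z = 0 (distribution of N is
   independent of z) from the root (whole cube), NQ_1 = 1. *)
Definition chi_val (m : nat) (mu0 mu1 : list bool -> R) (B : DT nat bool) : R :=
  EN m mu0 mu1 false (fun _ => True) B true.

Definition computes (g : list bool -> bool -> Prop) (m : nat) (B : DT nat bool) : Prop :=
  forall x b, length x = m -> ginv g b x -> run ask_bits B x = b.

Definition dist_on_ginv (g : list bool -> bool -> Prop) (m : nat) (b : bool)
  (mu : list bool -> R) : Prop :=
  (forall y, length y = m -> 0 <= mu y) /\
  sumR (map mu (allbits m)) = 1 /\
  (forall y, length y = m -> mu y <> 0 -> ginv g b y).

Definition is_glb (P : R -> Prop) (x : R) : Prop :=
  (forall y, P y -> x <= y) /\ (forall z, (forall y, P y -> z <= y) -> z <= x).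

(* chi(g) = max_{mu0,mu1} min_B chi(mu0,mu1,B), taken as sup / inf *)
Definition is_conflict_complexity (g : list bool -> bool -> Prop) (m : nat) (c : R) : Prop :=
  is_lub (fun r => exists mu0 mu1,
            dist_on_ginv g m false mu0 /\ dist_on_ginv g m true mu1 /\
            is_glb (fun v => exists B, computes g m B /\ v = chi_val m mu0 mu1 B) r) c.

(* Main.v *)
Require Import Defs.
From Stdlib Require Import Reals List.
From Stdlib Require Import Lra Lia Classical ClassicalEpsilon ZArith.
Require Import Defs.
Import ListNotations.
Open Scope R_scope.


Lemma ind_T (P : Prop) : P -> ind P = 1.
Proof. intro H; unfold ind; destruct (excluded_middle_informative P); tauto. Qed.
Lemma ind_F (P : Prop) : ~ P -> ind P = 0.
Proof. intro H; unfold ind; destruct (excluded_middle_informative P); tauto. Qed.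
Lemma ind_iff (P Q : Prop) : (P <-> Q) -> ind P = ind Q.
Proof.
  intro H; destruct (classic P) as [p|p].
  - rewrite !ind_T; tauto.
  - rewrite !ind_F; tauto.
Qed.
Lemma ind_bounds (P : Prop) : 0 <= ind P <= 1.
Proof. destruct (classic P) as [p|p]; [rewrite ind_T|rewrite ind_F]; auto; lra. Qed.
Lemma ind_split (P : Prop) (b : bool) :
  ind P = ind (P /\ b = false) + ind (P /\ b = true).
Proof.
  destruct (classic P) as [p|p]; destruct b.
  - rewrite (ind_T P), (ind_F (P /\ true = false)), (ind_T (P /\ true = true)); try (intros [_ h]; discriminate); try tauto; try lra.
  - rewrite (ind_T P), (ind_T (P /\ false = false)), (ind_F (P /\ false = true)); try (intros [_ h]; discriminate); try tauto; try lra.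
  - rewrite !ind_F; try tauto; lra.
  - rewrite !ind_F; try tauto; lra.
Qed.

Lemma sumR_app l1 l2 : sumR (l1 ++ l2) = sumR l1 + sumR l2.
Proof. induction l1; simpl; [lra|rewrite IHl1; lra]. Qed.
Lemma sumR_scale {A} (c : R) (f : A -> R) l :
  sumR (map (fun x => c * f x) l) = c * sumR (map f l).
Proof. induction l; simpl; [lra|rewrite IHl; lra]. Qed.
Lemma sumR_plus {A} (f h : A -> R) l :
  sumR (map (fun x => f x + h x) l) = sumR (map f l) + sumR (map h l).
Proof. induction l; simpl; [lra|rewrite IHl; lra]. Qed.
Lemma sumR_ext {A} (f h : A -> R) l :
  (forall x, In x l -> f x = h x) -> sumR (map f l) = sumR (map h l).
Proof. induction l; simpl; intros H; [lra|]. rewrite H, IHl; auto. Qed.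
Lemma sumR_le {A} (f h : A -> R) l :
  (forall x, In x l -> f x <= h x) -> sumR (map f l) <= sumR (map h l).
Proof. induction l; simpl; intros H; [lra|]. pose proof (H a (or_introl eq_refl)). pose proof (IHl (fun x h => H x (or_intror h))). lra. Qed.
Lemma sumR_nonneg {A} (f : A -> R) l :
  (forall x, In x l -> 0 <= f x) -> 0 <= sumR (map f l).
Proof. induction l; simpl; intros H; [lra|]. pose proof (H a (or_introl eq_refl)). pose proof (IHl (fun x h => H x (or_intror h))). lra. Qed.
Lemma sumR_zero {A} l : sumR (map (fun _ : A => 0) l) = 0.
Proof. induction l; simpl; lra. Qed.
Lemma sumR_map_map {A B} (f : B -> R) (h : A -> B) l :
  sumR (map f (map h l)) = sumR (map (fun x => f (h x)) l).
Proof. rewrite map_map; reflexivity. Qed.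
Lemma sumR_flat_map {A B} (f : B -> R) (h : A -> list B) l :
  sumR (map f (flat_map h l)) = sumR (map (fun x => sumR (map f (h x))) l).
Proof. induction l; simpl; auto. rewrite map_app, sumR_app, IHl; reflexivity. Qed.
Lemma sumR_swap {A B} (f : A -> B -> R) la lb :
  sumR (map (fun a => sumR (map (fun b => f a b) lb)) la) =
  sumR (map (fun b => sumR (map (fun a => f a b) la)) lb).
Proof.
  induction la; simpl.
  - rewrite sumR_zero; reflexivity.
  - rewrite IHla, <- sumR_plus; reflexivity.
Qed.

Lemma allbits_len k y : In y (allbits k) -> length y = k.
Proof.
  revert y; induction k; simpl; intros y H.
  - destruct H as [<-|[]]; reflexivity.
  - apply in_flat_map in H as [y' [Hy' H]]. simpl in H.
    destruct H as [<-|[<-|[]]]; simpl; f_equal; auto.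
Qed.


Definition C0 (C : list bool -> Prop) (j : nat) := fun y => C y /\ nth j y false = false.
Definition C1 (C : list bool -> Prop) (j : nat) := fun y => C y /\ nth j y false = true.

Definition nonneg_on (m : nat) (mu : list bool -> R) := forall y, length y = m -> 0 <= mu y.

Lemma mass_nonneg m mu C : nonneg_on m mu -> 0 <= mass m mu C.
Proof.
  intro H; unfold mass; apply sumR_nonneg; intros y Hy.
  pose proof (H y (allbits_len _ _ Hy)); pose proof (ind_bounds (C y)); nra.
Qed.
Lemma mass_ext m mu C D : (forall y, C y <-> D y) -> mass m mu C = mass m mu D.
Proof. intro H; unfold mass; apply sumR_ext; intros; rewrite (ind_iff _ _ (H x)); reflexivity. Qed.
Lemma mass_split m mu C j : mass m mu C = mass m mu (C0 C j) + mass m mu (C1 C j).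
Proof.
  unfold mass, C0, C1; rewrite <- sumR_plus; apply sumR_ext; intros y _.
  rewrite (ind_split (C y) (nth j y false)); ring.
Qed.
Lemma cp_bounds m mu C j : nonneg_on m mu -> 0 <= cond_prob0 m mu C j <= 1.
Proof.
  intro H. unfold cond_prob0; simpl.
  destruct (Req_EM_T (mass m mu C) 0) as [e|e]; [lra|].
  pose proof (mass_split m mu C j). pose proof (mass_nonneg m mu (C0 C j) H).
  pose proof (mass_nonneg m mu (C1 C j) H).
  fold (C0 C j). assert (0 < mass m mu C) by lra.
  split; [apply Rmult_le_pos; [lra|left; apply Rinv_0_lt_compat; lra]|].
  apply (Rmult_le_reg_r (mass m mu C)); [lra|].
  unfold Rdiv; rewrite Rmult_assoc, Rinv_l; lra.
Qed.
Lemma mass0_eq m mu C j : nonneg_on m mu ->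
  mass m mu (C0 C j) = cond_prob0 m mu C j * mass m mu C.
Proof.
  intro H.
  pose proof (mass_split m mu C j). pose proof (mass_nonneg m mu (C0 C j) H).
  pose proof (mass_nonneg m mu (C1 C j) H).
  unfold cond_prob0; simpl; fold (C0 C j); destruct (Req_EM_T (mass m mu C) 0) as [e|e].
  - lra.
  - field; auto.
Qed.
Lemma mass1_eq m mu C j : nonneg_on m mu ->
  mass m mu (C1 C j) = (1 - cond_prob0 m mu C j) * mass m mu C.
Proof.
  intro H. pose proof (mass_split m mu C j). pose proof (mass0_eq m mu C j H). lra.
Qed.
Lemma mass_pos0 m mu C j : nonneg_on m mu -> 0 < mass m mu C -> 0 < cond_prob0 m mu C j ->
  0 < mass m mu (C0 C j).
Proof. intros H h1 h2; rewrite mass0_eq by auto; nra. Qed.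
Lemma mass_pos1 m mu C j : nonneg_on m mu -> 0 < mass m mu C -> cond_prob0 m mu C j < 1 ->
  0 < mass m mu (C1 C j).
Proof. intros H h1 h2; rewrite mass1_eq by auto; nra. Qed.


Definition cp := cond_prob0.
Definition lo m mu0 mu1 C j := Rmin (cond_prob0 m mu0 C j) (cond_prob0 m mu1 C j).
Definition hi m mu0 mu1 C j := Rmax (cond_prob0 m mu0 C j) (cond_prob0 m mu1 C j).

Lemma lohi m mu0 mu1 C j : nonneg_on m mu0 -> nonneg_on m mu1 ->
  0 <= lo m mu0 mu1 C j <= hi m mu0 mu1 C j /\ hi m mu0 mu1 C j <= 1.
Proof.
  intros H0 H1; pose proof (cp_bounds m mu0 C j H0); pose proof (cp_bounds m mu1 C j H1).
  unfold lo, hi, Rmin, Rmax; destruct Rle_dec; lra.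
Qed.

Fixpoint EN1 m mu0 mu1 (C : list bool -> Prop) (T : DT nat bool) : R :=
  match T with
  | Leaf _ => 0
  | Node j t0 t1 => 1 + lo m mu0 mu1 C j * EN1 m mu0 mu1 (C0 C j) t0
                      + (1 - hi m mu0 mu1 C j) * EN1 m mu0 mu1 (C1 C j) t1
  end.

Fixpoint fl m mu0 mu1 (C : list bool -> Prop) (T : DT nat bool) : R :=
  match T with
  | Leaf _ => 0
  | Node j t0 t1 => (hi m mu0 mu1 C j - lo m mu0 mu1 C j)
                    + lo m mu0 mu1 C j * fl m mu0 mu1 (C0 C j) t0
                    + (1 - hi m mu0 mu1 C j) * fl m mu0 mu1 (C1 C j) t1
  end.

Lemma EN_false m mu0 mu1 z T : forall C, EN m mu0 mu1 z C T false = 0.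
Proof. induction T; intro C; simpl; auto. rewrite IHT1, IHT2; ring. Qed.

Lemma EN_true m mu0 mu1 z T : forall C, EN m mu0 mu1 z C T true = EN1 m mu0 mu1 C T.
Proof.
  induction T; intro C; simpl; auto. rewrite IHT1, IHT2, !EN_false.
  unfold lo, hi, C0, C1; ring.
Qed.

Lemma EN1_nonneg m mu0 mu1 T : nonneg_on m mu0 -> nonneg_on m mu1 ->
  forall C, 0 <= EN1 m mu0 mu1 C T.
Proof.
  intros H0 H1; induction T; intro C; simpl; [lra|].
  pose proof (lohi m mu0 mu1 C q H0 H1). pose proof (IHT1 (C0 C q)). pose proof (IHT2 (C1 C q)).
  nra.
Qed.

Lemma fl_bounds m mu0 mu1 T : nonneg_on m mu0 -> nonneg_on m mu1 ->
  forall C, 0 <= fl m mu0 mu1 C T <= 1.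
Proof.
  intros H0 H1; induction T; intro C; simpl; [lra|].
  pose proof (lohi m mu0 mu1 C q H0 H1). pose proof (IHT1 (C0 C q)). pose proof (IHT2 (C1 C q)).
  nra.
Qed.

Fixpoint graft (sel : (list bool -> Prop) -> DT nat bool) (C : list bool -> Prop) (T : DT nat bool) :=
  match T with
  | Leaf _ => sel C
  | Node j t0 t1 => Node j (graft sel (C0 C j) t0) (graft sel (C1 C j) t1)
  end.

Lemma graft_computes g m sel : (forall D, computes g m (sel D)) ->
  forall T C, computes g m (graft sel C T).
Proof.
  intros Hs T; induction T; intro C; simpl; auto.
  intros x b Hx Hg; simpl. destruct (ask_bits x q); [apply IHT2|apply IHT1]; auto.
Qed.

Definition masspos m mu0 mu1 C := 0 < mass m mu0 C /\ 0 < mass m mu1 C.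

Lemma graft_bound m mu0 mu1 sel Kb : nonneg_on m mu0 -> nonneg_on m mu1 ->
  (forall D, masspos m mu0 mu1 D -> EN1 m mu0 mu1 D (sel D) <= Kb) ->
  forall T C, masspos m mu0 mu1 C ->
  EN1 m mu0 mu1 C (graft sel C T) <= EN1 m mu0 mu1 C T + (1 - fl m mu0 mu1 C T) * Kb.
Proof.
  intros H0 H1 Hs T; induction T; intros C HC; simpl.
  - specialize (Hs C HC); lra.
  - pose proof (lohi m mu0 mu1 C q H0 H1) as [[Hl Hlh] Hh].
    assert (A0 : lo m mu0 mu1 C q * EN1 m mu0 mu1 (C0 C q) (graft sel (C0 C q) T1) <=
                 lo m mu0 mu1 C q * (EN1 m mu0 mu1 (C0 C q) T1 + (1 - fl m mu0 mu1 (C0 C q) T1) * Kb)).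
    { destruct Hl as [Hl|Hl].
      - apply Rmult_le_compat_l; [lra|]. apply IHT1.
        unfold lo, Rmin in Hl. destruct HC as [c0 c1].
        destruct (Rle_dec (cond_prob0 m mu0 C q) (cond_prob0 m mu1 C q)).
        + split; apply mass_pos0; auto; lra.
        + split; apply mass_pos0; auto; lra.
      - rewrite <- Hl; lra. }
    assert (A1 : (1 - hi m mu0 mu1 C q) * EN1 m mu0 mu1 (C1 C q) (graft sel (C1 C q) T2) <=
                 (1 - hi m mu0 mu1 C q) * (EN1 m mu0 mu1 (C1 C q) T2 + (1 - fl m mu0 mu1 (C1 C q) T2) * Kb)).
    { destruct Hh as [Hh|Hh].
      - apply Rmult_le_compat_l; [lra|]. apply IHT2.
        unfold hi, Rmax in Hh. destruct HC as [c0 c1].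
        destruct (Rle_dec (cond_prob0 m mu0 C q) (cond_prob0 m mu1 C q)).
        + split; apply mass_pos1; auto; lra.
        + split; apply mass_pos1; auto; lra.
      - rewrite Hh; lra. }
    lra.
Qed.

Definition nu m (mu : list bool -> R) (C : list bool -> Prop) : list bool -> R :=
  fun y => mu y * ind (C y) / mass m mu C.

Lemma ind_and P Q : ind P * ind Q = ind (P /\ Q).
Proof.
  destruct (classic P); destruct (classic Q);
  repeat first [rewrite (ind_T P) by auto | rewrite (ind_F P) by auto
               | rewrite (ind_T Q) by auto | rewrite (ind_F Q) by auto
               | rewrite (ind_T (P /\ Q)) by auto | rewrite (ind_F (P /\ Q)) by tauto]; ring.
Qed.

Lemma mass_cond m mu C D D' : 0 < mass m mu C -> (forall y, D' y <-> C y /\ D y) ->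
  mass m (nu m mu C) D = mass m mu D' / mass m mu C.
Proof.
  intros HM HD. unfold nu. set (M := mass m mu C). unfold Rdiv. rewrite Rmult_comm.
  unfold mass. rewrite <- sumR_scale. apply sumR_ext; intros y _.
  rewrite (ind_iff _ _ (HD y)), <- ind_and. ring.
Qed.

Lemma cp_cond m mu C D D' j : 0 < mass m mu C -> (forall y, D' y <-> C y /\ D y) ->
  cond_prob0 m (nu m mu C) D j = cond_prob0 m mu D' j.
Proof.
  intros HM HD. unfold cond_prob0; simpl.
  rewrite (mass_cond m mu C D D' HM HD).
  rewrite (mass_cond m mu C (fun y => D y /\ nth j y false = false)
                             (fun y => D' y /\ nth j y false = false) HM)
    by (intro y; rewrite HD; tauto).
  destruct (Req_EM_T (mass m mu D' / mass m mu C) 0) as [e|e];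
  destruct (Req_EM_T (mass m mu D') 0) as [e'|e'].
  - reflexivity.
  - exfalso. apply e'. apply (Rmult_eq_reg_r (/ mass m mu C)).
    + unfold Rdiv in e; rewrite e; ring.
    + apply Rinv_neq_0_compat; lra.
  - exfalso; apply e; rewrite e'; unfold Rdiv; ring.
  - field; split; lra.
Qed.

Lemma EN1_cond m mu0 mu1 C T : 0 < mass m mu0 C -> 0 < mass m mu1 C ->
  forall D D', (forall y, D' y <-> C y /\ D y) ->
  EN1 m mu0 mu1 D' T = EN1 m (nu m mu0 C) (nu m mu1 C) D T.
Proof.
  intros H0 H1; induction T; intros D D' HD; simpl; auto.
  unfold lo, hi. rewrite (cp_cond m mu0 C D D' q H0 HD), (cp_cond m mu1 C D D' q H1 HD).
  rewrite (IHT1 (C0 D q) (C0 D' q)), (IHT2 (C1 D q) (C1 D' q)); auto;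
  intro y; unfold C0, C1; rewrite HD; tauto.
Qed.

Lemma nu_dist g m b mu C : dist_on_ginv g m b mu -> 0 < mass m mu C ->
  dist_on_ginv g m b (nu m mu C).
Proof.
  intros [Hn [Hs Hg]] HM. split; [|split].
  - intros y Hy. unfold nu. pose proof (Hn y Hy). pose proof (ind_bounds (C y)).
    apply Rmult_le_pos; [nra|left; apply Rinv_0_lt_compat; auto].
  - unfold nu. unfold Rdiv. rewrite (sumR_ext _ (fun y => / mass m mu C * (mu y * ind (C y)))) by (intros; ring).
    rewrite sumR_scale. unfold mass in *. field. lra.
  - intros y Hy Hnz. apply Hg; auto. intro e; apply Hnz; unfold nu; rewrite e; unfold Rdiv; ring.
Qed.


Lemma glb_exists (P : R -> Prop) : (exists v, P v) -> (exists lb, forall v, P v -> lb <= v) ->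
  exists r, is_glb P r.
Proof.
  intros [v Hv] [lb Hlb].
  destruct (completeness (fun x => P (- x))) as [l [Hl1 Hl2]].
  - exists (- lb); intros x Hx; specialize (Hlb _ Hx); lra.
  - exists (- v); rewrite Ropp_involutive; auto.
  - exists (- l); split.
    + intros y Hy. assert (- y <= l) by (apply Hl1; rewrite Ropp_involutive; auto). lra.
    + intros z Hz. assert (l <= - z).
      { apply Hl2. intros x Hx. specialize (Hz _ Hx). lra. }
      lra.
Qed.

Lemma glb_nonempty (P : R -> Prop) r : is_glb P r -> exists v, P v.
Proof.
  intros [H1 H2]. apply NNPP; intro Hn.
  assert (r + 1 <= r) by (apply H2; intros y Hy; exfalso; apply Hn; eauto). lra.
Qed.

Lemma glb_approx (P : R -> Prop) r eps : is_glb P r -> 0 < eps -> exists v, P v /\ v < r + eps.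
Proof.
  intros [H1 H2] He. apply NNPP; intro Hn.
  assert (r + eps <= r); [|lra].
  apply H2; intros y Hy. apply Rnot_lt_le; intro; apply Hn; eauto.
Qed.

Lemma lub_approx (P : R -> Prop) r eps : is_lub P r -> 0 < eps -> exists v, P v /\ r - eps < v.
Proof.
  intros [H1 H2] He. apply NNPP; intro Hn.
  assert (r <= r - eps); [|lra].
  apply H2; intros y Hy. apply Rnot_lt_le; intro; apply Hn; eauto.
Qed.

Definition root : list bool -> Prop := fun _ => True.

Lemma mass_root m mu : sumR (map mu (allbits m)) = 1 -> mass m mu root = 1.
Proof.
  intro H; rewrite <- H; unfold mass; apply sumR_ext; intros; rewrite ind_T; unfold root; auto; ring.
Qed.

Lemma dist_nonneg g m b mu : dist_on_ginv g m b mu -> nonneg_on m mu.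
Proof. intros [H _]; exact H. Qed.

Section Single.
Variables (g : list bool -> bool -> Prop) (m : nat) (mu0 mu1 : list bool -> R) (chig eps : R).
Hypothesis Hd0 : dist_on_ginv g m false mu0.
Hypothesis Hd1 : dist_on_ginv g m true mu1.
Hypothesis Heps : 0 < eps.
Hypothesis Hopt : forall B, computes g m B -> chig - eps <= chi_val m mu0 mu1 B.
Hypothesis Hub : forall n0 n1 r, dist_on_ginv g m false n0 -> dist_on_ginv g m true n1 ->
  is_glb (fun v => exists B, computes g m B /\ v = chi_val m n0 n1 B) r -> r <= chig.
Hypothesis Hex : exists B, computes g m B.

Lemma sel_exists : forall D, exists T, computes g m T /\
  (masspos m mu0 mu1 D -> EN1 m mu0 mu1 D T <= chig + eps).
Proof.
  intro D. destruct (classic (masspos m mu0 mu1 D)) as [HD|HD].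
  - apply NNPP; intro Hn.
    assert (Hall : forall T, computes g m T -> chig + eps < EN1 m mu0 mu1 D T).
    { intros T HT. apply Rnot_le_lt; intro; apply Hn; eauto. }
    destruct HD as [D0p D1p].
    set (P := fun v => exists B, computes g m B /\ v = chi_val m (nu m mu0 D) (nu m mu1 D) B).
    assert (Hval : forall B, chi_val m (nu m mu0 D) (nu m mu1 D) B = EN1 m mu0 mu1 D B).
    { intro B. unfold chi_val. rewrite EN_true. symmetry; apply EN1_cond; auto.
      intro y; tauto. }
    destruct (glb_exists P) as [r Hr].
    + destruct Hex as [B HB]; exists (chi_val m (nu m mu0 D) (nu m mu1 D) B); exists B; auto.
    + exists (chig + eps). intros v [B [HB ->]]. rewrite Hval. left; auto.
    + assert (r <= chig) by (apply (Hub (nu m mu0 D) (nu m mu1 D) r); auto; apply nu_dist; auto).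
      destruct Hr as [_ Hr2].
      assert (chig + eps <= r); [|lra].
      apply Hr2. intros v [B [HB ->]]. rewrite Hval. left; auto.
  - destruct Hex as [B HB]; exists B; split; auto; tauto.
Qed.

Lemma single_block : forall T, - 2 * eps <= EN1 m mu0 mu1 root T - chig * fl m mu0 mu1 root T.
Proof.
  intro T.
  set (sel := fun D => proj1_sig (constructive_indefinite_description _ (sel_exists D))).
  assert (Hsel : forall D, computes g m (sel D) /\
           (masspos m mu0 mu1 D -> EN1 m mu0 mu1 D (sel D) <= chig + eps)).
  { intro D; unfold sel; destruct (constructive_indefinite_description _ (sel_exists D)); auto. }
  pose proof (dist_nonneg _ _ _ _ Hd0) as N0. pose proof (dist_nonneg _ _ _ _ Hd1) as N1.
  assert (Hr : masspos m mu0 mu1 root).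
  { destruct Hd0 as [_ [s0 _]]; destruct Hd1 as [_ [s1 _]].
    split; rewrite mass_root; auto; lra. }
  pose proof (graft_bound m mu0 mu1 sel (chig + eps) N0 N1 (fun D h => proj2 (Hsel D) h) T root Hr) as G1.
  pose proof (Hopt (graft sel root T) (graft_computes g m sel (fun D => proj1 (Hsel D)) T root)) as G2.
  unfold chi_val in G2. rewrite EN_true in G2. change (fun _ : list bool => True) with root in G2.
  pose proof (fl_bounds m mu0 mu1 T N0 N1 root) as G3.
  set (a := fl m mu0 mu1 root T) in *.
  assert (0 <= a * eps) by (apply Rmult_le_pos; lra).
  assert (E : (1 - a) * (chig + eps) = chig + eps - a * chig - a * eps) by ring.
  rewrite E in G1. lra.
Qed.
End Single.


Definition upd {T} (C : nat -> T) (i : nat) (D : T) : nat -> T :=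
  fun k => if Nat.eqb k i then D else C k.

Definition dir (b : bool) (p0 p1 : R) : bool :=
  if b then (if Rle_dec p0 p1 then false else true)
  else (if Rle_dec p1 p0 then false else true).

Lemma decomp (b : bool) p0 p1 X0 X1 :
  Rmin p0 p1 * X0 + (1 - Rmax p0 p1) * X1
  + (Rmax p0 p1 - Rmin p0 p1) * (if dir b p0 p1 then X1 else X0)
  = (if b then p1 else p0) * X0 + (1 - (if b then p1 else p0)) * X1.
Proof.
  unfold dir, Rmin, Rmax; destruct b; destruct (Rle_dec p0 p1); destruct (Rle_dec p1 p0);
  try (assert (p1 = p0) by lra; subst p1); try ring; exfalso; lra.
Qed.

Section Multi.
Variables (m n : nat) (mu0 mu1 : list bool -> R) (zz : nat -> bool).
Hypothesis N0 : nonneg_on m mu0.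
Hypothesis N1 : nonneg_on m mu1.

Definition P0 (C : nat -> list bool -> Prop) i j := cond_prob0 m mu0 (C i) j.
Definition P1 (C : nat -> list bool -> Prop) i j := cond_prob0 m mu1 (C i) j.
Definition Lo C i j := Rmin (P0 C i j) (P1 C i j).
Definition Hi C i j := Rmax (P0 C i j) (P1 C i j).
Definition Pz C i j := if zz i then P1 C i j else P0 C i j.
Definition Dr C i j := dir (zz i) (P0 C i j) (P1 C i j).
Definition Up0 (C : nat -> list bool -> Prop) i j := upd C i (C0 (C i) j).
Definition Up1 (C : nat -> list bool -> Prop) i j := upd C i (C1 (C i) j).

Lemma LoHi C i j : 0 <= Lo C i j <= Hi C i j /\ Hi C i j <= 1.
Proof. apply (lohi m mu0 mu1 (C i) j N0 N1). Qed.
Lemma Pz_b C i j : 0 <= Pz C i j <= 1.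
Proof. unfold Pz; destruct (zz i); [apply cp_bounds; auto|apply cp_bounds; auto]. Qed.

Section PEdef.
Variable S : Type.
Fixpoint PE (cost : nat -> bool -> R) (bonus : nat -> R) (F : S -> R)
  (B : DT (nat * nat) S) (C : nat -> list bool -> Prop) (nq : nat -> bool) : R :=
  match B with
  | Leaf l => F l
  | Node (i, j) t0 t1 =>
    if Nat.ltb i n then
      if nq i then
        cost i true + Lo C i j * PE cost bonus F t0 (Up0 C i j) nq
        + (1 - Hi C i j) * PE cost bonus F t1 (Up1 C i j) nq
        + (Hi C i j - Lo C i j) * (bonus i +
            (if Dr C i j then PE cost bonus F t1 (Up1 C i j) (upd nq i false)
             else PE cost bonus F t0 (Up0 C i j) (upd nq i false)))
      else cost i false + Pz C i j * PE cost bonus F t0 (Up0 C i j) nq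
           + (1 - Pz C i j) * PE cost bonus F t1 (Up1 C i j) nq
    else cost i (nq i) + PE cost bonus F t0 C nq
  end.

Fixpoint Plain (a : R) (F : S -> R) (B : DT (nat * nat) S) (C : nat -> list bool -> Prop) : R :=
  match B with
  | Leaf l => F l
  | Node (i, j) t0 t1 =>
    if Nat.ltb i n then
      a + Pz C i j * Plain a F t0 (Up0 C i j) + (1 - Pz C i j) * Plain a F t1 (Up1 C i j)
    else a + Plain a F t0 C
  end.

Lemma PE_plain a F B : forall C nq,
  PE (fun _ _ => a) (fun _ => 0) F B C nq = Plain a F B C.
Proof.
  induction B as [l|[i j] t0 IH0 t1 IH1]; intros C nq; simpl; auto.
  destruct (Nat.ltb i n); [|rewrite IH0; auto].
  destruct (nq i); [|rewrite IH0, IH1; reflexivity].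
  pose proof (decomp (zz i) (P0 C i j) (P1 C i j) (Plain a F t0 (Up0 C i j)) (Plain a F t1 (Up1 C i j))) as E.
  unfold Dr, Lo, Hi, Pz in *.
  destruct (dir (zz i) (P0 C i j) (P1 C i j)); rewrite !IH0, !IH1; lra.
Qed.

Lemma PE_ext c1 c2 b1 b2 F1 F2 B :
  (forall i b, c1 i b = c2 i b) -> (forall i, (i < n)%nat -> b1 i = b2 i) -> (forall s, F1 s = F2 s) ->
  forall C nq, PE c1 b1 F1 B C nq = PE c2 b2 F2 B C nq.
Proof.
  intros Hc Hb HF; induction B as [l|[i j] t0 IH0 t1 IH1]; intros C nq; simpl; auto.
  destruct (Nat.ltb i n) eqn:E; [|rewrite IH0, Hc; auto].
  apply Nat.ltb_lt in E.
  destruct (nq i); rewrite ?IH0, ?IH1, ?Hc, ?Hb; auto.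
Qed.

Lemma PE_lin al be c1 c2 b1 b2 F1 F2 B : forall C nq,
  PE (fun i b => al * c1 i b + be * c2 i b) (fun i => al * b1 i + be * b2 i)
     (fun s => al * F1 s + be * F2 s) B C nq
  = al * PE c1 b1 F1 B C nq + be * PE c2 b2 F2 B C nq.
Proof.
  induction B as [l|[i j] t0 IH0 t1 IH1]; intros C nq; simpl; auto.
  destruct (Nat.ltb i n); [|rewrite IH0; ring].
  destruct (nq i); [|rewrite IH0, IH1; ring].
  destruct (Dr C i j); rewrite !IH0, !IH1; ring.
Qed.

Lemma PE_mono c1 c2 b1 b2 F1 F2 B :
  (forall i b, c1 i b <= c2 i b) -> (forall i, (i < n)%nat -> b1 i <= b2 i) -> (forall s, F1 s <= F2 s) ->
  forall C nq, PE c1 b1 F1 B C nq <= PE c2 b2 F2 B C nq.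
Proof.
  intros Hc Hb HF; induction B as [l|[i j] t0 IH0 t1 IH1]; intros C nq; simpl; auto.
  destruct (Nat.ltb i n) eqn:E; [|specialize (IH0 C nq); specialize (Hc i (nq i)); lra].
  apply Nat.ltb_lt in E.
  pose proof (LoHi C i j) as [[h1 h2] h3]. pose proof (Pz_b C i j).
  destruct (nq i).
  - pose proof (IH0 (Up0 C i j) nq). pose proof (IH1 (Up1 C i j) nq).
    pose proof (Hc i true). pose proof (Hb i E).
    destruct (Dr C i j).
    + pose proof (IH1 (Up1 C i j) (upd nq i false)).
      apply Rplus_le_compat; [apply Rplus_le_compat; [apply Rplus_le_compat|]|]; try lra;
      apply Rmult_le_compat_l; lra.
    + pose proof (IH0 (Up0 C i j) (upd nq i false)).
      apply Rplus_le_compat; [apply Rplus_le_compat; [apply Rplus_le_compat|]|]; try lra;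
      apply Rmult_le_compat_l; lra.
  - pose proof (IH0 (Up0 C i j) nq). pose proof (IH1 (Up1 C i j) nq). pose proof (Hc i false).
    apply Rplus_le_compat; [apply Rplus_le_compat|]; try lra; apply Rmult_le_compat_l; lra.
Qed.

Lemma Plain_const c B : forall C, Plain 0 (fun _ => c) B C = c.
Proof.
  induction B as [l|[i j] t0 IH0 t1 IH1]; intros C; simpl; auto.
  destruct (Nat.ltb i n); rewrite ?IH0, ?IH1; ring.
Qed.

Lemma PE_const c B C nq : PE (fun _ _ => 0) (fun _ => 0) (fun _ => c) B C nq = c.
Proof. rewrite PE_plain; apply Plain_const. Qed.

Lemma upd_eq {T} (C : nat -> T) i D : upd C i D i = D.
Proof. unfold upd; rewrite Nat.eqb_refl; auto. Qed.
Lemma upd_neq {T} (C : nat -> T) i D k : k <> i -> upd C i D k = C k.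
Proof. intro h; unfold upd; apply Nat.eqb_neq in h; rewrite h; auto. Qed.

Definition ci0 (i0 : nat) : nat -> bool -> R := fun i b => if andb (Nat.eqb i i0) b then 1 else 0.
Definition bi0 (i0 : nat) (v : R) : nat -> R := fun i => if Nat.eqb i i0 then v else 0.

Lemma PE_zero_i0 i0 v B : forall C nq, nq i0 = false ->
  PE (ci0 i0) (bi0 i0 v) (fun _ => 0) B C nq = 0.
Proof.
  induction B as [l|[i j] t0 IH0 t1 IH1]; intros C nq Hq; simpl; auto.
  unfold ci0, bi0.
  destruct (Nat.eqb i i0) eqn:E.
  - apply Nat.eqb_eq in E; subst i. rewrite Hq.
    destruct (Nat.ltb i0 n); rewrite ?IH0, ?IH1; auto; simpl; ring.
  - apply Nat.eqb_neq in E. simpl.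
    assert (Hq' : upd nq i false i0 = false) by (rewrite upd_neq; auto).
    destruct (Nat.ltb i n); [destruct (nq i); [destruct (Dr C i j)|]|];
    rewrite ?IH0, ?IH1; auto; ring.
Qed.

Definition phi (chig : R) (D : list bool -> Prop) (T : DT nat bool) :=
  EN1 m mu0 mu1 D T - chig * fl m mu0 mu1 D T.

Lemma min3 chig D (Ta Tb Tc : DT nat bool) : exists T,
  phi chig D T <= phi chig D Ta /\ phi chig D T <= phi chig D Tb /\ phi chig D T <= phi chig D Tc.
Proof.
  destruct (Rle_dec (phi chig D Ta) (phi chig D Tb));
  destruct (Rle_dec (phi chig D Ta) (phi chig D Tc));
  destruct (Rle_dec (phi chig D Tb) (phi chig D Tc));
  [exists Ta|exists Ta|exists Tc|exists Tc|exists Tb|exists Tc|exists Tb|exists Tc]; lra.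
Qed.

Lemma PE_tree chig i0 B : (i0 < n)%nat -> forall C nq, nq i0 = true ->
  exists T, phi chig (C i0) T <= PE (ci0 i0) (bi0 i0 (- chig)) (fun _ => 0) B C nq.
Proof.
  intro Hi0; induction B as [l|[i j] t0 IH0 t1 IH1]; intros C nq Hq; simpl.
  - exists (Leaf true); unfold phi; simpl; lra.
  - destruct (Nat.eqb i i0) eqn:E.
    + apply Nat.eqb_eq in E; subst i. rewrite Hq.
      assert (Hl : Nat.ltb i0 n = true) by (apply Nat.ltb_lt; auto). rewrite Hl.
      assert (Ec : ci0 i0 i0 true = 1) by (unfold ci0; rewrite Nat.eqb_refl; auto).
      assert (Eb : bi0 i0 (-chig) i0 = -chig) by (unfold bi0; rewrite Nat.eqb_refl; auto).
      rewrite Ec, Eb.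
      destruct (IH0 (Up0 C i0 j) nq Hq) as [T0 H0].
      destruct (IH1 (Up1 C i0 j) nq Hq) as [T1 H1].
      assert (U0 : Up0 C i0 j i0 = C0 (C i0) j) by (unfold Up0; apply upd_eq).
      assert (U1 : Up1 C i0 j i0 = C1 (C i0) j) by (unfold Up1; apply upd_eq).
      rewrite U0 in H0; rewrite U1 in H1.
      exists (Node j T0 T1).
      assert (Hz : (if Dr C i0 j then PE (ci0 i0) (bi0 i0 (- chig)) (fun _ => 0) t1 (Up1 C i0 j) (upd nq i0 false)
               else PE (ci0 i0) (bi0 i0 (- chig)) (fun _ => 0) t0 (Up0 C i0 j) (upd nq i0 false)) = 0).
      { destruct (Dr C i0 j); apply PE_zero_i0; rewrite upd_eq; auto. }
      rewrite Hz.
      pose proof (LoHi C i0 j) as [[h1 h2] h3].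
      unfold phi in *; simpl. unfold Lo, Hi, P0, P1 in *. unfold lo, hi.
      set (L := Rmin (cond_prob0 m mu0 (C i0) j) (cond_prob0 m mu1 (C i0) j)) in *.
      set (H := Rmax (cond_prob0 m mu0 (C i0) j) (cond_prob0 m mu1 (C i0) j)) in *.
      assert (L * (EN1 m mu0 mu1 (C0 (C i0) j) T0 - chig * fl m mu0 mu1 (C0 (C i0) j) T0)
              <= L * PE (ci0 i0) (bi0 i0 (- chig)) (fun _ => 0) t0 (Up0 C i0 j) nq)
        by (apply Rmult_le_compat_l; lra).
      assert ((1 - H) * (EN1 m mu0 mu1 (C1 (C i0) j) T1 - chig * fl m mu0 mu1 (C1 (C i0) j) T1)
              <= (1 - H) * PE (ci0 i0) (bi0 i0 (- chig)) (fun _ => 0) t1 (Up1 C i0 j) nq)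
        by (apply Rmult_le_compat_l; lra).
      nra.
    + assert (Ec : forall b, ci0 i0 i b = 0) by (intro b; unfold ci0; rewrite E; auto).
      assert (Eb : bi0 i0 (-chig) i = 0) by (unfold bi0; rewrite E; auto).
      rewrite !Ec, Eb.
      apply Nat.eqb_neq in E.
      assert (U0 : Up0 C i j i0 = C i0) by (unfold Up0; rewrite upd_neq; auto).
      assert (U1 : Up1 C i j i0 = C i0) by (unfold Up1; rewrite upd_neq; auto).
      assert (Hq' : upd nq i false i0 = true) by (rewrite upd_neq; auto).
      pose proof (LoHi C i j) as [[h1 h2] h3]. pose proof (Pz_b C i j).
      destruct (Nat.ltb i n).
      * destruct (nq i).
        -- destruct (IH0 (Up0 C i j) nq Hq) as [T0 H0].
           destruct (IH1 (Up1 C i j) nq Hq) as [T1 H1].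
           destruct (Dr C i j).
           ++ destruct (IH1 (Up1 C i j) (upd nq i false) Hq') as [T2 H2].
              rewrite U0 in H0; rewrite U1 in H1, H2.
              destruct (min3 chig (C i0) T0 T1 T2) as [T [a [b c]]]. exists T.
              assert (Lo C i j * phi chig (C i0) T <= Lo C i j * PE (ci0 i0) (bi0 i0 (- chig)) (fun _ => 0) t0 (Up0 C i j) nq) by (apply Rmult_le_compat_l; lra).
              assert ((1 - Hi C i j) * phi chig (C i0) T <= (1 - Hi C i j) * PE (ci0 i0) (bi0 i0 (- chig)) (fun _ => 0) t1 (Up1 C i j) nq) by (apply Rmult_le_compat_l; lra).
              assert ((Hi C i j - Lo C i j) * phi chig (C i0) T <= (Hi C i j - Lo C i j) * PE (ci0 i0) (bi0 i0 (- chig)) (fun _ => 0) t1 (Up1 C i j) (upd nq i false)) by (apply Rmult_le_compat_l; lra).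
              nra.
           ++ destruct (IH0 (Up0 C i j) (upd nq i false) Hq') as [T2 H2].
              rewrite U0 in H0, H2; rewrite U1 in H1.
              destruct (min3 chig (C i0) T0 T1 T2) as [T [a [b c]]]. exists T.
              assert (Lo C i j * phi chig (C i0) T <= Lo C i j * PE (ci0 i0) (bi0 i0 (- chig)) (fun _ => 0) t0 (Up0 C i j) nq) by (apply Rmult_le_compat_l; lra).
              assert ((1 - Hi C i j) * phi chig (C i0) T <= (1 - Hi C i j) * PE (ci0 i0) (bi0 i0 (- chig)) (fun _ => 0) t1 (Up1 C i j) nq) by (apply Rmult_le_compat_l; lra).
              assert ((Hi C i j - Lo C i j) * phi chig (C i0) T <= (Hi C i j - Lo C i j) * PE (ci0 i0) (bi0 i0 (- chig)) (fun _ => 0) t0 (Up0 C i j) (upd nq i false)) by (apply Rmult_le_compat_l; lra).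
              nra.
        -- destruct (IH0 (Up0 C i j) nq Hq) as [T0 H0].
           destruct (IH1 (Up1 C i j) nq Hq) as [T1 H1].
           rewrite U0 in H0; rewrite U1 in H1.
           destruct (min3 chig (C i0) T0 T1 T1) as [T [a [b c]]]. exists T.
           assert (Pz C i j * phi chig (C i0) T <= Pz C i j * PE (ci0 i0) (bi0 i0 (- chig)) (fun _ => 0) t0 (Up0 C i j) nq) by (apply Rmult_le_compat_l; lra).
           assert ((1 - Pz C i j) * phi chig (C i0) T <= (1 - Pz C i j) * PE (ci0 i0) (bi0 i0 (- chig)) (fun _ => 0) t1 (Up1 C i j) nq) by (apply Rmult_le_compat_l; lra).
           nra.
      * destruct (IH0 C nq Hq) as [T0 H0]. exists T0. lra.
Qed.
End PEdef.
End Multi.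


Fixpoint prodR (n : nat) (h : nat -> R) : R :=
  match n with O => 1 | S n' => h O * prodR n' (fun i => h (S i)) end.

Lemma prodR_ext n : forall h h', (forall i, (i < n)%nat -> h i = h' i) -> prodR n h = prodR n h'.
Proof.
  induction n; intros h h' H; simpl; auto.
  rewrite H by lia. f_equal. apply IHn. intros; apply H; lia.
Qed.

Lemma prodR_replace n : forall h h' i c, (i < n)%nat -> h' i = c * h i ->
  (forall k, k <> i -> h' k = h k) -> prodR n h' = c * prodR n h.
Proof.
  induction n; intros h h' i c Hi Hc Hk; [lia|simpl].
  destruct i.
  - rewrite Hc. rewrite (prodR_ext n (fun i => h' (S i)) (fun i => h (S i))); [ring|].
    intros; apply Hk; lia.
  - rewrite (Hk 0%nat) by lia. rewrite (IHn (fun k => h (S k)) (fun k => h' (S k)) i c).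
    + ring.
    + lia.
    + auto.
    + intros k hk; apply Hk; lia.
Qed.

Lemma prodR_nonneg n : forall h, (forall i, (i < n)%nat -> 0 <= h i) -> 0 <= prodR n h.
Proof.
  induction n; intros h H; simpl; [lra|].
  apply Rmult_le_pos; [apply H; lia|apply IHn; intros; apply H; lia].
Qed.

Lemma prodR_nz n : forall h, prodR n h <> 0 -> forall i, (i < n)%nat -> h i <> 0.
Proof.
  induction n; intros h H i Hi; [lia|simpl in H].
  destruct i.
  - intro e; apply H; rewrite e; ring.
  - apply (IHn (fun k => h (S k))); [|lia]. intro e; apply H; rewrite e; ring.
Qed.

Lemma prodR_one n : prodR n (fun _ => 1) = 1.
Proof. induction n; simpl; auto. rewrite IHn; ring. Qed.

Section Fact.
Variable m : nat.

Fixpoint allblocks (n : nat) : list (list (list bool)) :=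
  match n with
  | O => [nil]
  | S n' => flat_map (fun y => map (cons y) (allblocks n')) (allbits m)
  end.

Lemma allblocks_valid n x : In x (allblocks n) -> blocks n m x.
Proof.
  revert x; induction n; simpl; intros x H.
  - destruct H as [<-|[]]; split; auto.
  - apply in_flat_map in H as [y [Hy H]]. apply in_map_iff in H as [x' [<- Hx']].
    destruct (IHn x' Hx') as [l F]. split; simpl; auto.
    constructor; auto. apply allbits_len; auto.
Qed.

Lemma factor n : forall h : nat -> list bool -> R,
  sumR (map (fun x => prodR n (fun i => h i (nth i x nil))) (allblocks n))
  = prodR n (fun i => sumR (map (h i) (allbits m))).
Proof.
  induction n; intro h; simpl; [ring|].
  rewrite sumR_flat_map.
  rewrite (sumR_ext _ (fun y => h O y * prodR n (fun i => sumR (map (h (S i)) (allbits m))))).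
  - rewrite Rmult_comm.
    rewrite (sumR_ext _ (fun y => prodR n (fun i => sumR (map (h (S i)) (allbits m))) * h O y))
      by (intros; ring).
    rewrite sumR_scale. ring.
  - intros y _. rewrite sumR_map_map. simpl.
    rewrite sumR_scale. f_equal. apply (IHn (fun i => h (S i))).
Qed.

Variables (n : nat) (mu0 mu1 : list bool -> R) (zz : nat -> bool).
Hypothesis N0 : nonneg_on m mu0.
Hypothesis N1 : nonneg_on m mu1.

Definition mu_of (b : bool) := if b then mu1 else mu0.
Definition W (C : nat -> list bool -> Prop) (x : list (list bool)) :=
  prodR n (fun i => mu_of (zz i) (nth i x nil) * ind (C i (nth i x nil))).
Definition M (C : nat -> list bool -> Prop) := prodR n (fun i => mass m (mu_of (zz i)) (C i)).

Lemma sumW C : sumR (map (W C) (allblocks n)) = M C.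
Proof.
  unfold W, M. rewrite (factor n (fun i y => mu_of (zz i) y * ind (C i y))). reflexivity.
Qed.

Lemma Pz_eq C i j : Pz m mu0 mu1 zz C i j = cond_prob0 m (mu_of (zz i)) (C i) j.
Proof. unfold Pz, P0, P1, mu_of; destruct (zz i); auto. Qed.

Lemma nn_of b : nonneg_on m (mu_of b).
Proof. destruct b; auto. Qed.

Lemma M_up0 C i j : (i < n)%nat -> M (Up0 C i j) = Pz m mu0 mu1 zz C i j * M C.
Proof.
  intro Hi. unfold M. apply prodR_replace with (i := i); auto.
  - unfold Up0; rewrite upd_eq, Pz_eq. apply mass0_eq, nn_of.
  - intros k hk; unfold Up0; rewrite upd_neq; auto.
Qed.
Lemma M_up1 C i j : (i < n)%nat -> M (Up1 C i j) = (1 - Pz m mu0 mu1 zz C i j) * M C.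
Proof.
  intro Hi. unfold M. apply prodR_replace with (i := i); auto.
  - unfold Up1; rewrite upd_eq, Pz_eq. apply mass1_eq, nn_of.
  - intros k hk; unfold Up1; rewrite upd_neq; auto.
Qed.

Lemma W_up0 C i j x : (i < n)%nat ->
  W (Up0 C i j) x = ind (nth j (nth i x nil) false = false) * W C x.
Proof.
  intro Hi. unfold W. apply prodR_replace with (i := i); auto.
  - unfold Up0; rewrite upd_eq. unfold C0. rewrite <- ind_and. ring.
  - intros k hk; unfold Up0; rewrite upd_neq; auto.
Qed.
Lemma W_up1 C i j x : (i < n)%nat ->
  W (Up1 C i j) x = ind (nth j (nth i x nil) false = true) * W C x.
Proof.
  intro Hi. unfold W. apply prodR_replace with (i := i); auto.
  - unfold Up1; rewrite upd_eq. unfold C1. rewrite <- ind_and. ring.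
  - intros k hk; unfold Up1; rewrite upd_neq; auto.
Qed.

Lemma fact1 {S} (a : R) (F : S -> R) B : forall C,
  M C * Plain m n mu0 mu1 zz S a F B C =
  sumR (map (fun x => W C x * (a * INR (nqueries ask_blocks B x) + F (run ask_blocks B x)))
    (allblocks n)).
Proof.
  induction B as [l|[i j] t0 IH0 t1 IH1]; intros C; cbn [Plain nqueries run].
  - rewrite (sumR_ext _ (fun x => F l * W C x)) by (intros; simpl INR; ring).
    rewrite sumR_scale, sumW. ring.
  - destruct (Nat.ltb i n) eqn:E.
    + apply Nat.ltb_lt in E.
      rewrite (sumR_ext _ (fun x => a * W (Up0 C i j) x + a * W (Up1 C i j) x +
                  (W (Up0 C i j) x * (a * INR (nqueries ask_blocks t0 x) + F (run ask_blocks t0 x)) +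
                   W (Up1 C i j) x * (a * INR (nqueries ask_blocks t1 x) + F (run ask_blocks t1 x))))).
      * rewrite !sumR_plus, !sumR_scale, !sumW, <- IH0, <- IH1, M_up0, M_up1 by auto. ring.
      * intros x _. rewrite W_up0, W_up1 by auto. rewrite S_INR.
        change (ask_blocks x (i, j)) with (nth j (nth i x nil) false).
        destruct (nth j (nth i x nil) false).
        -- rewrite (ind_F (true = false)), (ind_T (true = true)) by (auto; discriminate). ring.
        -- rewrite (ind_T (false = false)), (ind_F (false = true)) by (auto; discriminate). ring.
    + apply Nat.ltb_ge in E.
      rewrite (sumR_ext _ (fun x => a * W C x +
                  W C x * (a * INR (nqueries ask_blocks t0 x) + F (run ask_blocks t0 x)))).
      * rewrite sumR_plus, sumR_scale, sumW, <- IH0. ring.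
      * intros x Hx. destruct (allblocks_valid n x Hx) as [Hl _].
        rewrite S_INR.
        change (ask_blocks x (i, j)) with (nth j (nth i x nil) false).
        rewrite (nth_overflow x nil) by lia. destruct j; simpl; ring.
Qed.
End Fact.


Definition scale {Q L} (c : R) (D : RandAlg Q L) : RandAlg Q L :=
  map (fun p => (c * fst p, snd p)) D.
Definition comb {L} (i : nat) (D0 D1 : RandAlg nat L) : RandAlg nat L :=
  flat_map (fun p0 => map (fun p1 => (fst p0 * fst p1, Node i (snd p0) (snd p1))) D1) D0.

Lemma wsum_app {Q L} (D1 D2 : RandAlg Q L) : sumR (map fst (D1 ++ D2)) = sumR (map fst D1) + sumR (map fst D2).
Proof. rewrite map_app, sumR_app; auto. Qed.
Lemma wsum_scale {Q L} c (D : RandAlg Q L) : sumR (map fst (scale c D)) = c * sumR (map fst D).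
Proof. unfold scale; rewrite map_map; simpl. apply sumR_scale. Qed.
Lemma wsum_comb {L} i (D0 D1 : RandAlg nat L) :
  sumR (map fst (comb i D0 D1)) = sumR (map fst D0) * sumR (map fst D1).
Proof.
  unfold comb. rewrite sumR_flat_map.
  rewrite (sumR_ext _ (fun p0 => sumR (map fst D1) * fst p0)).
  - rewrite sumR_scale. ring.
  - intros p0 _. rewrite map_map; simpl. rewrite sumR_scale. ring.
Qed.

Section Succ.
Variables (X Q L : Type) (ask : X -> Q -> bool) (h : X -> L -> Prop) (x : X).
Lemma succ_app (D1 D2 : RandAlg Q L) :
  success_prob ask h (D1 ++ D2) x = success_prob ask h D1 x + success_prob ask h D2 x.
Proof. unfold success_prob; rewrite map_app, sumR_app; auto. Qed.
Lemma succ_scale c (D : RandAlg Q L) :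
  success_prob ask h (scale c D) x = c * success_prob ask h D x.
Proof.
  unfold success_prob, scale. rewrite map_map; simpl.
  rewrite <- sumR_scale. apply sumR_ext; intros; ring.
Qed.
End Succ.

Lemma succ_comb {L} (h : list bool -> L -> Prop) z i (D0 D1 : RandAlg nat L) :
  success_prob ask_bits h (comb i D0 D1) z =
  if ask_bits z i then sumR (map fst D0) * success_prob ask_bits h D1 z
  else success_prob ask_bits h D0 z * sumR (map fst D1).
Proof.
  unfold success_prob, comb. rewrite sumR_flat_map.
  destruct (ask_bits z i) eqn:E.
  - rewrite (sumR_ext _ (fun p0 => sumR (map (fun p => fst p * ind (h z (run ask_bits (snd p) z))) D1) * fst p0)).
    + rewrite sumR_scale. ring.
    + intros p0 _. rewrite map_map; simpl. rewrite E.
      rewrite Rmult_comm, <- sumR_scale. apply sumR_ext; intros; ring.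
  - rewrite (sumR_ext _ (fun p0 => sumR (map fst D1) * (fst p0 * ind (h z (run ask_bits (snd p0) z))))).
    + rewrite sumR_scale. ring.
    + intros p0 _. rewrite map_map; simpl. rewrite E.
      rewrite Rmult_comm, <- sumR_scale. apply sumR_ext; intros; ring.
Qed.

Section Sim.
Variables (m n : nat) (mu0 mu1 : list bool -> R).
Hypothesis N0 : nonneg_on m mu0.
Hypothesis N1 : nonneg_on m mu1.
Variable St : Type.
Variable s0 : St.

Fixpoint Sim (B : DT (nat * nat) St) (C : nat -> list bool -> Prop) (nq zk : nat -> bool) (k : nat)
  : RandAlg nat St :=
  match B with
  | Leaf l => [(1, Leaf l)]
  | Node (i, j) t0 t1 =>
    if Nat.ltb i n then
      if nq i then
        scale (Lo m mu0 mu1 C i j) (Sim t0 (Up0 C i j) nq zk k)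
        ++ scale (1 - Hi m mu0 mu1 C i j) (Sim t1 (Up1 C i j) nq zk k)
        ++ scale (Hi m mu0 mu1 C i j - Lo m mu0 mu1 C i j)
             (match k with
              | O => [(1, Leaf s0)]
              | S k' => comb i
                  (if dir false (P0 m mu0 C i j) (P1 m mu1 C i j)
                   then Sim t1 (Up1 C i j) (upd nq i false) (upd zk i false) k'
                   else Sim t0 (Up0 C i j) (upd nq i false) (upd zk i false) k')
                  (if dir true (P0 m mu0 C i j) (P1 m mu1 C i j)
                   then Sim t1 (Up1 C i j) (upd nq i false) (upd zk i true) k'
                   else Sim t0 (Up0 C i j) (upd nq i false) (upd zk i true) k')
              end)
      else scale (Pz m mu0 mu1 zk C i j) (Sim t0 (Up0 C i j) nq zk k)
           ++ scale (1 - Pz m mu0 mu1 zk C i j) (Sim t1 (Up1 C i j) nq zk k)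
    else Sim t0 C nq zk k
  end.

Lemma Sim_node i j t0 t1 C nq zk k : Sim (Node (i, j) t0 t1) C nq zk k =
    if Nat.ltb i n then
      if nq i then
        scale (Lo m mu0 mu1 C i j) (Sim t0 (Up0 C i j) nq zk k)
        ++ scale (1 - Hi m mu0 mu1 C i j) (Sim t1 (Up1 C i j) nq zk k)
        ++ scale (Hi m mu0 mu1 C i j - Lo m mu0 mu1 C i j)
             (match k with
              | O => [(1, Leaf s0)]
              | S k' => comb i
                  (if dir false (P0 m mu0 C i j) (P1 m mu1 C i j)
                   then Sim t1 (Up1 C i j) (upd nq i false) (upd zk i false) k'
                   else Sim t0 (Up0 C i j) (upd nq i false) (upd zk i false) k')
                  (if dir true (P0 m mu0 C i j) (P1 m mu1 C i j)
                   then Sim t1 (Up1 C i j) (upd nq i false) (upd zk i true) k'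
                   else Sim t0 (Up0 C i j) (upd nq i false) (upd zk i true) k')
              end)
      else scale (Pz m mu0 mu1 zk C i j) (Sim t0 (Up0 C i j) nq zk k)
           ++ scale (1 - Pz m mu0 mu1 zk C i j) (Sim t1 (Up1 C i j) nq zk k)
    else Sim t0 C nq zk k.
Proof. reflexivity. Qed.

Lemma in_scale {Q L'} c (D : RandAlg Q L') p : In p (scale c D) -> exists p', In p' D /\ p = (c * fst p', snd p').
Proof. unfold scale; intro H; apply in_map_iff in H as [p' [<- Hp]]; eauto. Qed.

Lemma in_comb {L'} i (D0 D1 : RandAlg nat L') p : In p (comb i D0 D1) ->
  exists p0 p1, In p0 D0 /\ In p1 D1 /\ p = (fst p0 * fst p1, Node i (snd p0) (snd p1)).
Proof.
  unfold comb; intro H; apply in_flat_map in H as [p0 [H0 H]]. apply in_map_iff in H as [p1 [<- H1]]; eauto.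
Qed.

Lemma sim_prop B : forall C nq zk k,
  (forall p, In p (Sim B C nq zk k) -> 0 <= fst p /\ forall z, (nqueries ask_bits (snd p) z <= k)%nat)
  /\ sumR (map fst (Sim B C nq zk k)) = 1.
Proof.
  induction B as [l|[i j] t0 IH0 t1 IH1]; intros C nq zk k.
  - simpl. split; [|ring]. intros p [<-|[]]; simpl; split; [lra|intros; lia].
  - destruct (Nat.ltb i n) eqn:Hlt; [|simpl; rewrite Hlt; apply IH0].
    pose proof (LoHi m mu0 mu1 N0 N1 C i j) as [[h1 h2] h3].
    destruct (nq i) eqn:Hnq.
    + assert (Hk : exists Dk, Sim (Node (i, j) t0 t1) C nq zk k =
          scale (Lo m mu0 mu1 C i j) (Sim t0 (Up0 C i j) nq zk k)
          ++ scale (1 - Hi m mu0 mu1 C i j) (Sim t1 (Up1 C i j) nq zk k)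
          ++ scale (Hi m mu0 mu1 C i j - Lo m mu0 mu1 C i j) Dk /\
          (forall p, In p Dk -> 0 <= fst p /\ forall z, (nqueries ask_bits (snd p) z <= k)%nat) /\
          sumR (map fst Dk) = 1).
      { eexists; split; [rewrite Sim_node, Hlt, Hnq; reflexivity|].
        destruct k as [|k'].
        - 
          split; [|simpl; ring]. intros p [<-|[]]; simpl; split; [lra|intros; lia].
        - set (D0 := if dir false (P0 m mu0 C i j) (P1 m mu1 C i j)
                   then Sim t1 (Up1 C i j) (upd nq i false) (upd zk i false) k'
                   else Sim t0 (Up0 C i j) (upd nq i false) (upd zk i false) k').
          set (D1 := if dir true (P0 m mu0 C i j) (P1 m mu1 C i j)
                   then Sim t1 (Up1 C i j) (upd nq i false) (upd zk i true) k'
                   else Sim t0 (Up0 C i j) (upd nq i false) (upd zk i true) k').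
          fold D0 D1.
          assert (HD0 : (forall p, In p D0 -> 0 <= fst p /\ forall z, (nqueries ask_bits (snd p) z <= k')%nat) /\ sumR (map fst D0) = 1)
            by (unfold D0; destruct (dir false (P0 m mu0 C i j) (P1 m mu1 C i j)); [apply IH1|apply IH0]).
          assert (HD1 : (forall p, In p D1 -> 0 <= fst p /\ forall z, (nqueries ask_bits (snd p) z <= k')%nat) /\ sumR (map fst D1) = 1)
            by (unfold D1; destruct (dir true (P0 m mu0 C i j) (P1 m mu1 C i j)); [apply IH1|apply IH0]).
          destruct HD0 as [A0 S0]; destruct HD1 as [A1 S1].
          split; [|rewrite wsum_comb, S0, S1; ring].
          intros p Hp. apply in_comb in Hp as [p0 [p1 [Hp0 [Hp1 ->]]]].
          destruct (A0 p0 Hp0) as [a0 b0]; destruct (A1 p1 Hp1) as [a1 b1].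
          simpl; split; [apply Rmult_le_pos; auto|].
          intro z. destruct (ask_bits z i); [specialize (b1 z)|specialize (b0 z)]; lia. }
      destruct Hk as [Dk [Hsim [Ak Sk]]]. rewrite Hsim.
      destruct (IH0 (Up0 C i j) nq zk k) as [A0 S0]. destruct (IH1 (Up1 C i j) nq zk k) as [A1 S1].
      split.
      * intros p Hp. apply in_app_or in Hp as [Hp|Hp]; [|apply in_app_or in Hp as [Hp|Hp]];
        apply in_scale in Hp as [p' [Hp' ->]]; simpl.
        -- destruct (A0 p' Hp'); split; auto; apply Rmult_le_pos; auto.
        -- destruct (A1 p' Hp'); split; auto; apply Rmult_le_pos; lra.
        -- destruct (Ak p' Hp'); split; auto; apply Rmult_le_pos; lra.
      * rewrite !wsum_app, !wsum_scale, S0, S1, Sk. ring.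
    + rewrite Sim_node, Hlt, Hnq. pose proof (Pz_b m mu0 mu1 zk N0 N1 C i j).
      destruct (IH0 (Up0 C i j) nq zk k) as [A0 S0]. destruct (IH1 (Up1 C i j) nq zk k) as [A1 S1].
      split.
      * intros p Hp. apply in_app_or in Hp as [Hp|Hp];
        apply in_scale in Hp as [p' [Hp' ->]]; simpl.
        -- destruct (A0 p' Hp'); split; auto; apply Rmult_le_pos; lra.
        -- destruct (A1 p' Hp'); split; auto; apply Rmult_le_pos; lra.
      * rewrite !wsum_app, !wsum_scale, S0, S1. ring.
Qed.
End Sim.


Section Ps.
Variables (m n : nat) (mu0 mu1 : list bool -> R) (zz : nat -> bool).
Hypothesis N0 : nonneg_on m mu0.
Hypothesis N1 : nonneg_on m mu1.
Variable St : Type.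

Fixpoint Psucc (Fs : St -> R) (dflt : R) (B : DT (nat * nat) St) (C : nat -> list bool -> Prop)
  (nq : nat -> bool) (k : nat) : R :=
  match B with
  | Leaf l => Fs l
  | Node (i, j) t0 t1 =>
    if Nat.ltb i n then
      if nq i then
        Lo m mu0 mu1 C i j * Psucc Fs dflt t0 (Up0 C i j) nq k
        + (1 - Hi m mu0 mu1 C i j) * Psucc Fs dflt t1 (Up1 C i j) nq k
        + (Hi m mu0 mu1 C i j - Lo m mu0 mu1 C i j) *
          (match k with
           | O => dflt
           | S k' => if Dr m mu0 mu1 zz C i j then Psucc Fs dflt t1 (Up1 C i j) (upd nq i false) k'
                     else Psucc Fs dflt t0 (Up0 C i j) (upd nq i false) k'
           end)
      else Pz m mu0 mu1 zz C i j * Psucc Fs dflt t0 (Up0 C i j) nq k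
           + (1 - Pz m mu0 mu1 zz C i j) * Psucc Fs dflt t1 (Up1 C i j) nq k
    else Psucc Fs dflt t0 C nq k
  end.

Lemma Psucc_node Fs dflt i j t0 t1 C nq k : Psucc Fs dflt (Node (i, j) t0 t1) C nq k =
    if Nat.ltb i n then
      if nq i then
        Lo m mu0 mu1 C i j * Psucc Fs dflt t0 (Up0 C i j) nq k
        + (1 - Hi m mu0 mu1 C i j) * Psucc Fs dflt t1 (Up1 C i j) nq k
        + (Hi m mu0 mu1 C i j - Lo m mu0 mu1 C i j) *
          (match k with
           | O => dflt
           | S k' => if Dr m mu0 mu1 zz C i j then Psucc Fs dflt t1 (Up1 C i j) (upd nq i false) k'
                     else Psucc Fs dflt t0 (Up0 C i j) (upd nq i false) k'
           end)
      else Pz m mu0 mu1 zz C i j * Psucc Fs dflt t0 (Up0 C i j) nq k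
           + (1 - Pz m mu0 mu1 zz C i j) * Psucc Fs dflt t1 (Up1 C i j) nq k
    else Psucc Fs dflt t0 C nq k.
Proof. reflexivity. Qed.

Lemma Psucc_bounds Fs dflt B : (forall s, 0 <= Fs s <= 1) -> 0 <= dflt <= 1 ->
  forall C nq k, 0 <= Psucc Fs dflt B C nq k <= 1.
Proof.
  intros HF Hd; induction B as [l|[i j] t0 IH0 t1 IH1]; intros C nq k; [simpl; auto|].
  rewrite Psucc_node.
  pose proof (LoHi m mu0 mu1 N0 N1 C i j) as [[h1 h2] h3]. pose proof (Pz_b m mu0 mu1 zz N0 N1 C i j).
  destruct (Nat.ltb i n); [|auto].
  destruct (nq i).
  - assert (0 <= match k with
           | O => dflt
           | S k' => if Dr m mu0 mu1 zz C i j then Psucc Fs dflt t1 (Up1 C i j) (upd nq i false) k'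
                     else Psucc Fs dflt t0 (Up0 C i j) (upd nq i false) k'
           end <= 1) by (destruct k; [auto|destruct (Dr m mu0 mu1 zz C i j); auto]).
    pose proof (IH0 (Up0 C i j) nq k). pose proof (IH1 (Up1 C i j) nq k). nra.
  - pose proof (IH0 (Up0 C i j) nq k). pose proof (IH1 (Up1 C i j) nq k). nra.
Qed.

Definition Eflips B C nq := PE m n mu0 mu1 zz St (fun _ _ => 0) (fun _ => 1) (fun _ => 0) B C nq.

Lemma Eflips_nonneg B C nq : 0 <= Eflips B C nq.
Proof.
  unfold Eflips. pose proof (PE_const m n mu0 mu1 zz St 0 B C nq) as E.
  eapply Rle_trans; [right; symmetry; exact E|].
  apply PE_mono; auto; intros; lra.
Qed.

Lemma Eflips_node i j t0 t1 C nq : Eflips (Node (i, j) t0 t1) C nq =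
    if Nat.ltb i n then
      if nq i then
        0 + Lo m mu0 mu1 C i j * Eflips t0 (Up0 C i j) nq
        + (1 - Hi m mu0 mu1 C i j) * Eflips t1 (Up1 C i j) nq
        + (Hi m mu0 mu1 C i j - Lo m mu0 mu1 C i j) * (1 +
            (if Dr m mu0 mu1 zz C i j then Eflips t1 (Up1 C i j) (upd nq i false)
             else Eflips t0 (Up0 C i j) (upd nq i false)))
      else 0 + Pz m mu0 mu1 zz C i j * Eflips t0 (Up0 C i j) nq
           + (1 - Pz m mu0 mu1 zz C i j) * Eflips t1 (Up1 C i j) nq
    else 0 + Eflips t0 C nq.
Proof. reflexivity. Qed.

Lemma markov B : forall C nq k,
  INR (S k) * Psucc (fun _ => 0) 1 B C nq k <= Eflips B C nq.
Proof.
  induction B as [l|[i j] t0 IH0 t1 IH1]; intros C nq k; [unfold Eflips; cbn [Psucc PE]; lra|].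
  rewrite Psucc_node, Eflips_node.
  pose proof (LoHi m mu0 mu1 N0 N1 C i j) as [[h1 h2] h3]. pose proof (Pz_b m mu0 mu1 zz N0 N1 C i j).
  destruct (Nat.ltb i n). 2:{ specialize (IH0 C nq k). lra. }
  destruct (nq i).
  - set (Ed := if Dr m mu0 mu1 zz C i j then Eflips t1 (Up1 C i j) (upd nq i false)
               else Eflips t0 (Up0 C i j) (upd nq i false)).
    assert (HX : INR (S k) * match k with
           | O => 1
           | S k' => if Dr m mu0 mu1 zz C i j then Psucc (fun _ => 0) 1 t1 (Up1 C i j) (upd nq i false) k'
                     else Psucc (fun _ => 0) 1 t0 (Up0 C i j) (upd nq i false) k'
           end <= 1 + Ed).
    { assert (0 <= Ed) by (unfold Ed; destruct (Dr m mu0 mu1 zz C i j); apply Eflips_nonneg).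
      destruct k as [|k']; [simpl; lra|].
      unfold Ed; destruct (Dr m mu0 mu1 zz C i j).
      - pose proof (IH1 (Up1 C i j) (upd nq i false) k').
        pose proof (Psucc_bounds (fun _ => 0) 1 t1 (fun _ => conj (Rle_refl 0) Rle_0_1) (conj Rle_0_1 (Rle_refl 1)) (Up1 C i j) (upd nq i false) k').
        rewrite S_INR. nra.
      - pose proof (IH0 (Up0 C i j) (upd nq i false) k').
        pose proof (Psucc_bounds (fun _ => 0) 1 t0 (fun _ => conj (Rle_refl 0) Rle_0_1) (conj Rle_0_1 (Rle_refl 1)) (Up0 C i j) (upd nq i false) k').
        rewrite S_INR. nra. }
    pose proof (IH0 (Up0 C i j) nq k). pose proof (IH1 (Up1 C i j) nq k).
    fold Ed.
    assert (Lo m mu0 mu1 C i j * (INR (S k) * Psucc (fun _ => 0) 1 t0 (Up0 C i j) nq k) <= Lo m mu0 mu1 C i j * Eflips t0 (Up0 C i j) nq) by (apply Rmult_le_compat_l; lra).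
    assert ((1 - Hi m mu0 mu1 C i j) * (INR (S k) * Psucc (fun _ => 0) 1 t1 (Up1 C i j) nq k) <= (1 - Hi m mu0 mu1 C i j) * Eflips t1 (Up1 C i j) nq) by (apply Rmult_le_compat_l; lra).
    assert ((Hi m mu0 mu1 C i j - Lo m mu0 mu1 C i j) * (INR (S k) * match k with
           | O => 1
           | S k' => if Dr m mu0 mu1 zz C i j then Psucc (fun _ => 0) 1 t1 (Up1 C i j) (upd nq i false) k'
                     else Psucc (fun _ => 0) 1 t0 (Up0 C i j) (upd nq i false) k'
           end) <= (Hi m mu0 mu1 C i j - Lo m mu0 mu1 C i j) * (1 + Ed)) by (apply Rmult_le_compat_l; lra).
    nra.
  - pose proof (IH0 (Up0 C i j) nq k). pose proof (IH1 (Up1 C i j) nq k).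
    assert (Pz m mu0 mu1 zz C i j * (INR (S k) * Psucc (fun _ => 0) 1 t0 (Up0 C i j) nq k) <= Pz m mu0 mu1 zz C i j * Eflips t0 (Up0 C i j) nq) by (apply Rmult_le_compat_l; lra).
    assert ((1 - Pz m mu0 mu1 zz C i j) * (INR (S k) * Psucc (fun _ => 0) 1 t1 (Up1 C i j) nq k) <= (1 - Pz m mu0 mu1 zz C i j) * Eflips t1 (Up1 C i j) nq) by (apply Rmult_le_compat_l; lra).
    nra.
Qed.

Definition Full Fs B C nq := PE m n mu0 mu1 zz St (fun _ _ => 0) (fun _ => 0) Fs B C nq.

Lemma Full_node Fs i j t0 t1 C nq : Full Fs (Node (i, j) t0 t1) C nq =
    if Nat.ltb i n then
      if nq i then
        0 + Lo m mu0 mu1 C i j * Full Fs t0 (Up0 C i j) nq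
        + (1 - Hi m mu0 mu1 C i j) * Full Fs t1 (Up1 C i j) nq
        + (Hi m mu0 mu1 C i j - Lo m mu0 mu1 C i j) * (0 +
            (if Dr m mu0 mu1 zz C i j then Full Fs t1 (Up1 C i j) (upd nq i false)
             else Full Fs t0 (Up0 C i j) (upd nq i false)))
      else 0 + Pz m mu0 mu1 zz C i j * Full Fs t0 (Up0 C i j) nq
           + (1 - Pz m mu0 mu1 zz C i j) * Full Fs t1 (Up1 C i j) nq
    else 0 + Full Fs t0 C nq.
Proof. reflexivity. Qed.

Lemma Full_le1 Fs B C nq : (forall s, Fs s <= 1) -> Full Fs B C nq <= 1.
Proof.
  intro H. unfold Full. pose proof (PE_const m n mu0 mu1 zz St 1 B C nq) as E.
  eapply Rle_trans; [|right; exact E].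
  apply PE_mono; auto; intros; lra.
Qed.

Lemma psucc_ge Fs dflt B : (forall s, 0 <= Fs s <= 1) -> 0 <= dflt ->
  forall C nq k, Full Fs B C nq - Psucc (fun _ => 0) 1 B C nq k <= Psucc Fs dflt B C nq k.
Proof.
  intros HF Hd; induction B as [l|[i j] t0 IH0 t1 IH1]; intros C nq k.
  - unfold Full; cbn [Psucc PE]. lra.
  - rewrite !Psucc_node, Full_node.
    pose proof (LoHi m mu0 mu1 N0 N1 C i j) as [[h1 h2] h3]. pose proof (Pz_b m mu0 mu1 zz N0 N1 C i j).
    destruct (Nat.ltb i n). 2:{ specialize (IH0 C nq k). lra. }
    destruct (nq i).
    + set (Fd := if Dr m mu0 mu1 zz C i j then Full Fs t1 (Up1 C i j) (upd nq i false)
             else Full Fs t0 (Up0 C i j) (upd nq i false)).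
      assert (HX : Fd - match k with
           | O => 1
           | S k' => if Dr m mu0 mu1 zz C i j then Psucc (fun _ => 0) 1 t1 (Up1 C i j) (upd nq i false) k'
                     else Psucc (fun _ => 0) 1 t0 (Up0 C i j) (upd nq i false) k'
           end <= match k with
           | O => dflt
           | S k' => if Dr m mu0 mu1 zz C i j then Psucc Fs dflt t1 (Up1 C i j) (upd nq i false) k'
                     else Psucc Fs dflt t0 (Up0 C i j) (upd nq i false) k'
           end).
      { destruct k as [|k'].
        - assert (Fd <= 1) by (unfold Fd; destruct (Dr m mu0 mu1 zz C i j); apply Full_le1; intro s; apply HF).
          lra.
        - unfold Fd; destruct (Dr m mu0 mu1 zz C i j); [apply IH1|apply IH0]. }
      fold Fd.
      pose proof (IH0 (Up0 C i j) nq k). pose proof (IH1 (Up1 C i j) nq k).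
      nra.
    + pose proof (IH0 (Up0 C i j) nq k). pose proof (IH1 (Up1 C i j) nq k). nra.
Qed.
End Ps.

Lemma succ_leaf {X Q L} (ask : X -> Q -> bool) (h : X -> L -> Prop) x s :
  success_prob ask h [(1, Leaf s)] x = ind (h x s).
Proof. unfold success_prob; simpl; ring. Qed.

Lemma sim_succ m n mu0 mu1 (N0 : nonneg_on m mu0) (N1 : nonneg_on m mu1) St (h : list bool -> St -> Prop)
  (z : list bool) (s0 : St) B : forall C nq zk k,
  (forall i, nq i = false -> zk i = nth i z false) ->
  success_prob ask_bits h (Sim m n mu0 mu1 St s0 B C nq zk k) z =
  Psucc m n mu0 mu1 (fun i => nth i z false) St (fun s => ind (h z s)) (ind (h z s0)) B C nq k.
Proof.
  induction B as [l|[i j] t0 IH0 t1 IH1]; intros C nq zk k Hinv.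
  - simpl. apply succ_leaf.
  - rewrite Sim_node, Psucc_node.
    destruct (Nat.ltb i n); [|apply IH0; auto].
    destruct (nq i) eqn:Hnq.
    + rewrite !succ_app, !succ_scale, IH0, IH1 by auto.
      destruct k as [|k'].
      * rewrite succ_leaf; ring.
      * rewrite succ_comb. change (ask_bits z i) with (nth i z false).
        unfold Dr.
        assert (Hinv' : forall b, nth i z false = b -> forall i0, upd nq i false i0 = false -> upd zk i b i0 = nth i0 z false).
        { intros b Hb i0. destruct (Nat.eq_dec i0 i) as [->|ne].
          - rewrite !upd_eq; auto.
          - rewrite !upd_neq by auto. apply Hinv. }
        destruct (nth i z false) eqn:Ez.
        -- destruct (dir true (P0 m mu0 C i j) (P1 m mu1 C i j));
           destruct (dir false (P0 m mu0 C i j) (P1 m mu1 C i j));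
           rewrite (proj2 (sim_prop m n mu0 mu1 N0 N1 St s0 _ _ _ _ _)), ?IH0, ?IH1; auto; ring.
        -- destruct (dir true (P0 m mu0 C i j) (P1 m mu1 C i j));
           destruct (dir false (P0 m mu0 C i j) (P1 m mu1 C i j));
           rewrite (proj2 (sim_prop m n mu0 mu1 N0 N1 St s0 _ _ _ _ _)), ?IH0, ?IH1; auto; ring.
    + rewrite !succ_app, !succ_scale, IH0, IH1 by auto.
      unfold Pz. rewrite (Hinv i Hnq). reflexivity.
Qed.


Fixpoint sumN (N : nat) (h : nat -> R) : R :=
  match N with O => 0 | S N' => sumN N' h + h N' end.

Lemma sumN_ind N i v : sumN N (fun i0 => if Nat.eqb i i0 then v else 0) = if Nat.ltb i N then v else 0.
Proof.
  induction N; cbn [sumN].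
  - destruct i; simpl; auto.
  - rewrite IHN. destruct (Nat.ltb_spec i N); destruct (Nat.eqb_spec i N);
    destruct (Nat.ltb_spec i (S N)); try lia; lra.
Qed.

Lemma sumN_ge N h a : (forall i, (i < N)%nat -> a <= h i) -> INR N * a <= sumN N h.
Proof.
  induction N; intro H; cbn [sumN]; [simpl; lra|].
  rewrite S_INR. pose proof (H N (Nat.lt_succ_diag_r N)).
  assert (INR N * a <= sumN N h) by (apply IHN; intros; apply H; lia). lra.
Qed.

Section Bound.
Variables (m n : nat) (mu0 mu1 : list bool -> R) (zz : nat -> bool).
Hypothesis N0 : nonneg_on m mu0.
Hypothesis N1 : nonneg_on m mu1.
Hypothesis S0 : sumR (map mu0 (allbits m)) = 1.
Hypothesis S1 : sumR (map mu1 (allbits m)) = 1.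
Variable St : Type.

Lemma PE_sumN cs bs B C nq N :
  sumN N (fun i0 => PE m n mu0 mu1 zz St (cs i0) (bs i0) (fun _ => 0) B C nq) =
  PE m n mu0 mu1 zz St (fun i b => sumN N (fun i0 => cs i0 i b)) (fun i => sumN N (fun i0 => bs i0 i))
    (fun _ => 0) B C nq.
Proof.
  induction N; simpl.
  - symmetry. apply (PE_const m n mu0 mu1 zz St 0).
  - rewrite IHN.
    rewrite <- (Rmult_1_l (PE _ _ _ _ _ _ _ _ _ B C nq)) at 1.
    rewrite <- (Rmult_1_l (PE _ _ _ _ _ _ (cs N) _ _ B C nq)).
    rewrite <- PE_lin. apply PE_ext; intros; ring.
Qed.

Definition Croot : nat -> list bool -> Prop := fun _ => root.
Definition nqT : nat -> bool := fun _ => true.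

Lemma M_root : M m n mu0 mu1 zz Croot = 1.
Proof.
  unfold M. rewrite <- (prodR_one n). apply prodR_ext. intros i _.
  unfold mu_of; destruct (zz i); apply mass_root; auto.
Qed.

Lemma W_nonneg C x : blocks n m x -> 0 <= W n mu0 mu1 zz C x.
Proof.
  intros [Hl HF]. unfold W. apply prodR_nonneg. intros i Hi.
  assert (length (nth i x nil) = m).
  { rewrite Forall_forall in HF. apply HF. apply nth_In. lia. }
  pose proof (nn_of m mu0 mu1 N0 N1 (zz i) (nth i x nil) H).
  pose proof (ind_bounds (Croot i (nth i x nil))). pose proof (ind_bounds (C i (nth i x nil))). nra.
Qed.

Variables (chig eps : R) (r1 : nat).
Hypothesis Hphi : forall T, - 2 * eps <= phi m mu0 mu1 chig root T.

Lemma sumN_ext N h h' : (forall i, h i = h' i) -> sumN N h = sumN N h'.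
Proof. intro H; induction N; simpl; auto. rewrite IHN, H; auto. Qed.

Lemma eflips_bound B : (forall x, blocks n m x -> (nqueries ask_blocks B x <= r1)%nat) ->
  chig * Eflips m n mu0 mu1 zz St B Croot nqT <= INR r1 + 2 * INR n * eps.
Proof.
  intro Hd.
  set (cN := fun i (b : bool) => if andb (Nat.ltb i n) b then 1 else 0).
  set (Nsum := PE m n mu0 mu1 zz St cN (fun _ => 0) (fun _ => 0) B Croot nqT).
  assert (H1 : Nsum - chig * Eflips m n mu0 mu1 zz St B Croot nqT =
     sumN n (fun i0 => PE m n mu0 mu1 zz St (ci0 i0) (bi0 i0 (- chig)) (fun _ => 0) B Croot nqT)).
  { rewrite PE_sumN. unfold Nsum, Eflips.
    transitivity (1 * PE m n mu0 mu1 zz St cN (fun _ => 0) (fun _ => 0) B Croot nqT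
       + (- chig) * PE m n mu0 mu1 zz St (fun _ _ => 0) (fun _ => 1) (fun _ => 0) B Croot nqT); [ring|].
    rewrite <- PE_lin. apply PE_ext.
    - intros i b. unfold cN, ci0. destruct b.
      + rewrite (sumN_ext n _ (fun i0 => if Nat.eqb i i0 then 1 else 0))
          by (intro; rewrite Bool.andb_true_r; auto).
        rewrite sumN_ind, Bool.andb_true_r. destruct (Nat.ltb i n); ring.
      + rewrite (sumN_ext n _ (fun i0 => if Nat.eqb i i0 then 0 else 0))
          by (intro; rewrite Bool.andb_false_r; destruct (Nat.eqb i i0); auto).
        rewrite sumN_ind, Bool.andb_false_r. destruct (Nat.ltb i n); ring.
    - intros i Hi. unfold bi0. rewrite sumN_ind.
      assert (E : Nat.ltb i n = true) by (apply Nat.ltb_lt; auto). rewrite E. ring.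
    - intros; ring. }
  assert (H2 : INR n * (- 2 * eps) <=
     sumN n (fun i0 => PE m n mu0 mu1 zz St (ci0 i0) (bi0 i0 (- chig)) (fun _ => 0) B Croot nqT)).
  { apply sumN_ge. intros i0 Hi0.
    destruct (PE_tree m n mu0 mu1 zz N0 N1 St chig i0 B Hi0 Croot nqT eq_refl) as [T HT].
    pose proof (Hphi T). change (Croot i0) with root in HT. lra. }
  assert (H3 : Nsum <= INR r1).
  { apply Rle_trans with (PE m n mu0 mu1 zz St (fun _ _ => 1) (fun _ => 0) (fun _ => 0) B Croot nqT).
    - apply PE_mono; auto; intros; [unfold cN; destruct (andb _ _); lra|lra|lra].
    - rewrite PE_plain.
      pose proof (fact1 m n mu0 mu1 zz N0 N1 1 (fun _ : St => 0) B Croot) as E.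
      rewrite M_root, Rmult_1_l in E. rewrite E.
      pose proof (sumW m n mu0 mu1 zz Croot) as SW. rewrite M_root in SW.
      apply Rle_trans with (sumR (map (fun x => INR r1 * W n mu0 mu1 zz Croot x) (allblocks m n))).
      + apply sumR_le. intros x Hx.
        pose proof (allblocks_valid m n x Hx) as Hv.
        pose proof (W_nonneg Croot x Hv). pose proof (le_INR _ _ (Hd x Hv)).
        nra.
      + rewrite sumR_scale, SW. lra. }
  pose proof (pos_INR n). lra.
Qed.
End Bound.


Lemma compose_iff {St} n (f : list bool -> St -> Prop) g z x s :
  length z = n -> (forall i, (i < n)%nat -> ginv g (nth i z false) (nth i x nil)) ->
  (f z s <-> compose n f g x s).
Proof.
  intros Hz Hg; split.
  - intro H. exists z; split; auto. split; auto. intros i Hi. apply Hg; auto.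
  - intros [b [Hb [Hgb Hf]]].
    assert (b = z) as ->; auto.
    apply nth_ext with (d := false) (d' := false); [lia|].
    intros i Hi. destruct (Hg i ltac:(lia)) as [g1 g2].
    specialize (Hgb i ltac:(lia)).
    destruct (nth i b false); destruct (nth i z false); auto; simpl in g2; contradiction.
Qed.

Section FullS.
Variables (St : Type) (f : list bool -> St -> Prop) (g : list bool -> bool -> Prop) (n m : nat).
Variables (mu0 mu1 : list bool -> R) (z : list bool).
Hypothesis Hz : length z = n.
Hypothesis Hd0 : dist_on_ginv g m false mu0.
Hypothesis Hd1 : dist_on_ginv g m true mu1.
Variable Alg : RandAlg (nat * nat) St.
Hypothesis HA : forall x, blocks n m x -> success_prob ask_blocks (compose n f g) Alg x >= 1 - 1/3.

Let zz := fun i => nth i z false.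
Let N0 := dist_nonneg _ _ _ _ Hd0.
Let N1 := dist_nonneg _ _ _ _ Hd1.

Lemma full_avg : 2/3 <= sumR (map (fun p => fst p *
   Full m n mu0 mu1 zz St (fun s => ind (f z s)) (snd p) Croot nqT) Alg).
Proof.
  pose proof Hd0 as [_ [S0 G0]]. pose proof Hd1 as [_ [S1 G1]].
  rewrite (sumR_ext _ (fun p => sumR (map (fun x => fst p * (W n mu0 mu1 zz Croot x *
        (0 * INR (nqueries ask_blocks (snd p) x) + ind (f z (run ask_blocks (snd p) x))))) (allblocks m n)))).
  2:{ intros p _. unfold Full. rewrite PE_plain.
      pose proof (fact1 m n mu0 mu1 zz N0 N1 0 (fun s => ind (f z s)) (snd p) Croot) as E.
      rewrite M_root, Rmult_1_l in E by auto. rewrite E, sumR_scale. reflexivity. }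
  rewrite sumR_swap.
  apply Rle_trans with (sumR (map (fun x => 2/3 * W n mu0 mu1 zz Croot x) (allblocks m n))).
  { rewrite sumR_scale, sumW, M_root by auto. lra. }
  apply sumR_le. intros x Hx. pose proof (allblocks_valid m n x Hx) as Hv.
  pose proof (W_nonneg m n mu0 mu1 zz N0 N1 Croot x Hv) as Wn.
  destruct (Req_EM_T (W n mu0 mu1 zz Croot x) 0) as [e|e].
  - rewrite e. rewrite (sumR_ext _ (fun _ => 0)) by (intros; ring). rewrite sumR_zero. lra.
  - assert (Hg : forall i, (i < n)%nat -> ginv g (nth i z false) (nth i x nil)).
    { intros i Hi. pose proof (prodR_nz n _ e i Hi) as Hnz.
      assert (Hl : length (nth i x nil) = m).
      { destruct Hv as [Hlx HF]. rewrite Forall_forall in HF. apply HF, nth_In. lia. }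
      unfold mu_of, zz in Hnz. destruct (nth i z false) eqn:Ez.
      - apply G1; auto. intro h; apply Hnz; rewrite h; ring.
      - apply G0; auto. intro h; apply Hnz; rewrite h; ring. }
    rewrite (sumR_ext _ (fun p => W n mu0 mu1 zz Croot x * (fst p * ind (compose n f g x (run ask_blocks (snd p) x))))).
    2:{ intros p _. rewrite (ind_iff _ _ (compose_iff n f g z x _ Hz Hg)). ring. }
    rewrite sumR_scale. fold (success_prob ask_blocks (compose n f g) Alg x).
    pose proof (HA x Hv). nra.
Qed.
End FullS.


Lemma floor_exists x : 0 <= x -> exists k : nat, INR k <= x < INR k + 1.
Proof.
  intro Hx. destruct (archimed x) as [h1 h2].
  assert (Hu : (1 <= up x)%Z).
  { apply le_IZR. simpl. assert (0 < IZR (up x)) by lra.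
    destruct (Z_lt_le_dec (up x) 1) as [l|l]; [|apply IZR_le in l; simpl in l; lra].
    assert (up x <= 0)%Z by lia. apply IZR_le in H0. simpl in H0. lra. }
  exists (Z.to_nat (up x - 1)).
  rewrite INR_IZR_INZ, Z2Nat.id by lia. rewrite minus_IZR. simpl. lra.
Qed.

Lemma min_nat (P : nat -> Prop) : (exists d, P d) -> exists r, P r /\ forall d, P d -> (r <= d)%nat.
Proof.
  intros [d Hd]. apply NNPP; intro Hn.
  assert (forall k, forall d, (d <= k)%nat -> ~ P d).
  { induction k; intros d' Hd' Pd'.
    - apply Hn; exists d'; split; auto. intros e _; lia.
    - destruct (Nat.eq_dec d' (S k)) as [->|ne]; [|apply (IHk d'); auto; lia].
      apply Hn; exists (S k); split; auto. intros e Pe.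
      destruct (Nat.le_gt_cases (S k) e); auto. exfalso; apply (IHk e); auto; lia. }
  apply (H d d); auto.
Qed.

Lemma chi_ge1 g m mu0 mu1 B x0 x1 : nonneg_on m mu0 -> nonneg_on m mu1 ->
  length x0 = m -> ginv g false x0 -> length x1 = m -> ginv g true x1 ->
  computes g m B -> 1 <= chi_val m mu0 mu1 B.
Proof.
  intros N0 N1 l0 h0 l1 h1 HB. destruct B as [b|j t0 t1].
  - exfalso. destruct b.
    + specialize (HB x0 false l0 h0). simpl in HB. discriminate.
    + specialize (HB x1 true l1 h1). simpl in HB. discriminate.
  - unfold chi_val. rewrite EN_true. simpl.
    pose proof (lohi m mu0 mu1 (fun _ => True) j N0 N1).
    pose proof (EN1_nonneg m mu0 mu1 t0 N0 N1 (C0 (fun _ => True) j)).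
    pose proof (EN1_nonneg m mu0 mu1 t1 N0 N1 (C1 (fun _ => True) j)).
    nra.
Qed.

Lemma succ_flat_map {X Q L A} (ask : X -> Q -> bool) h (F : A -> RandAlg Q L) l x :
  success_prob ask h (flat_map F l) x = sumR (map (fun a => success_prob ask h (F a) x) l).
Proof. unfold success_prob. apply sumR_flat_map. Qed.


Theorem theorem3 :
  exists c : R, 0 < c /\
  forall (n m : nat), (0 < n)%nat -> (0 < m)%nat ->
  forall (S : Type) (f : list bool -> S -> Prop) (g : list bool -> bool -> Prop),
    partial_bool g m ->
    (exists x, length x = m /\ ginv g false x) ->
    (exists x, length x = m /\ ginv g true x) ->
    forall chig : R, is_conflict_complexity g m chig ->
    forall r1 : nat,
      is_Rcomplexity ask_blocks (blocks n m) (compose n f g) (1/3) r1 ->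
      exists r2 : nat,
        is_Rcomplexity ask_bits (bits n) f (4/9) r2 /\
        c * INR r2 * chig <= INR r1.
Proof.
  exists (1/9). split; [lra|].
  intros n m Hn Hm St f g _ [x0 [l0 h0]] [x1 [l1 h1]] chig Hchi r1 [[A [[HAn HAs] [HAd HAsucc]]] _].
  assert (Hc1 : 1 <= chig).
  { destruct (lub_approx _ chig 1 Hchi Rlt_0_1) as [v [[n0 [n1 [d0 [d1 Hg]]]] _]].
    assert (v <= chig) by (apply (proj1 Hchi); exists n0, n1; auto).
    assert (1 <= v); [|lra].
    apply (proj2 Hg). intros y [B [HB ->]].
    apply (chi_ge1 g m n0 n1 B x0 x1); auto; [apply (dist_nonneg _ _ _ _ d0)|apply (dist_nonneg _ _ _ _ d1)]. }
  destruct A as [|p0 A'] eqn:EA; [simpl in HAs; lra|].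
  rewrite <- EA in *.
  set (s0 := run ask_blocks (snd p0) nil).
  assert (Hr1c : 0 <= 9 * INR r1 / chig).
  { apply Rmult_le_pos; [pose proof (pos_INR r1); lra|left; apply Rinv_0_lt_compat; lra]. }
  destruct (floor_exists _ Hr1c) as [k [Hk1 Hk2]].
  set (delta := INR k + 1 - 9 * INR r1 / chig).
  assert (Hdelta : 0 < delta) by (unfold delta; lra).
  set (eps := delta * chig / (18 * (INR n + 1))).
  assert (Hn1 : 0 < INR n + 1) by (pose proof (pos_INR n); lra).
  assert (Heps : 0 < eps).
  { unfold eps. apply Rmult_lt_0_compat; [nra|apply Rinv_0_lt_compat; lra]. }
  destruct (lub_approx _ chig eps Hchi Heps) as [v [[mu0 [mu1 [d0 [d1 Hg]]]] Hv]].
  pose proof (dist_nonneg _ _ _ _ d0) as N0. pose proof (dist_nonneg _ _ _ _ d1) as N1.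
  assert (Hphi : forall T, - 2 * eps <= phi m mu0 mu1 chig root T).
  { intro T. unfold phi. apply (single_block g m mu0 mu1 chig eps d0 d1 Heps).
    - intros B HB. assert (v <= chi_val m mu0 mu1 B) by (apply (proj1 Hg); eauto). lra.
    - intros a0 a1 r da0 da1 Hr. apply (proj1 Hchi). exists a0, a1; auto.
    - destruct (glb_nonempty _ _ Hg) as [w [B [HB _]]]; eauto. }
  set (Alg := flat_map (fun p => scale (fst p)
          (Sim m n mu0 mu1 St s0 (snd p) Croot nqT (fun _ => false) k)) A).
  assert (Hach : achieves ask_bits (bits n) f (4/9) k).
  { exists Alg. split; [split|split].
    - apply Forall_forall. intros p Hp. unfold Alg in Hp.
      apply in_flat_map in Hp as [q [Hq Hp]]. apply in_scale in Hp as [p' [Hp' ->]].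
      simpl. rewrite Forall_forall in HAn.
      apply Rmult_le_pos; [apply HAn; auto|].
      apply (proj1 (sim_prop m n mu0 mu1 N0 N1 St s0 _ _ _ _ _) p' Hp').
    - unfold Alg. rewrite sumR_flat_map. rewrite <- HAs. apply sumR_ext. intros q _.
      rewrite wsum_scale, (proj2 (sim_prop m n mu0 mu1 N0 N1 St s0 _ _ _ _ _)). ring.
    - intros p Hp x _. unfold Alg in Hp.
      apply in_flat_map in Hp as [q [Hq Hp]]. apply in_scale in Hp as [p' [Hp' ->]].
      simpl. apply (proj1 (sim_prop m n mu0 mu1 N0 N1 St s0 _ _ _ _ _) p' Hp').
    - intros z Hz. unfold bits in Hz.
      set (zz := fun i => nth i z false).
      unfold Alg. rewrite succ_flat_map.
      set (K := (INR r1 + 2 * INR n * eps) / (chig * INR (Datatypes.S k))).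
      assert (HK : K <= 1/9).
      { unfold K. rewrite S_INR.
        assert (E1 : eps * (18 * (INR n + 1)) = delta * chig) by (unfold eps; field; lra).
        assert (E2 : chig * (INR k + 1) = chig * delta + 9 * INR r1) by (unfold delta; field; lra).
        assert (0 < chig * (INR k + 1)) by (pose proof (pos_INR k); nra).
        apply (Rmult_le_reg_r (chig * (INR k + 1))); auto.
        unfold Rdiv at 1. rewrite Rmult_assoc, Rinv_l by lra.
        pose proof (pos_INR n). nra. }
      assert (Hq : forall q, In q A ->
        Full m n mu0 mu1 zz St (fun s => ind (f z s)) (snd q) Croot nqT - K <=
        success_prob ask_bits f (Sim m n mu0 mu1 St s0 (snd q) Croot nqT (fun _ => false) k) z).
      { intros q Hq. rewrite (sim_succ m n mu0 mu1 N0 N1 St f z s0 (snd q)) by (intros i e; discriminate e).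
        fold zz.
        pose proof (psucc_ge m n mu0 mu1 zz N0 N1 St (fun s => ind (f z s)) (ind (f z s0)) (snd q)
           (fun s => ind_bounds _) (proj1 (ind_bounds _)) Croot nqT k).
        pose proof (markov m n mu0 mu1 zz N0 N1 St (snd q) Croot nqT k).
        pose proof (eflips_bound m n mu0 mu1 zz N0 N1 (proj1 (proj2 d0)) (proj1 (proj2 d1)) St chig eps r1 Hphi (snd q)
           (fun x hx => HAd q Hq x hx)).
        assert (Tail_le : Psucc m n mu0 mu1 zz St (fun _ => 0) 1 (snd q) Croot nqT k <= K).
        { unfold K. assert (0 < INR (Datatypes.S k)) by (apply lt_0_INR; lia).
          apply (Rmult_le_reg_l (chig * INR (Datatypes.S k))); [nra|].
          assert (E : chig * INR (Datatypes.S k) * ((INR r1 + 2 * INR n * eps) / (chig * INR (Datatypes.S k)))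
                      = INR r1 + 2 * INR n * eps) by (field; split; lra).
          rewrite E. nra. }
        lra. }
      apply Rle_ge. apply Rle_trans with (2/3 - K); [lra|].
      apply Rle_trans with (sumR (map (fun q => fst q * (Full m n mu0 mu1 zz St (fun s => ind (f z s)) (snd q) Croot nqT - K)) A)).
      + rewrite (sumR_ext _ (fun q => fst q * Full m n mu0 mu1 zz St (fun s => ind (f z s)) (snd q) Croot nqT + (- K) * fst q))
          by (intros; ring).
        rewrite sumR_plus, sumR_scale, HAs.
        pose proof (full_avg St f g n m mu0 mu1 z Hz d0 d1 A HAsucc). fold zz in H. lra.
      + apply sumR_le. intros q Hqa. rewrite succ_scale.
        apply Rmult_le_compat_l; [rewrite Forall_forall in HAn; apply HAn; auto|]. apply Hq; auto. }
  destruct (min_nat _ (ex_intro _ k Hach)) as [r2 [Hr2a Hr2b]].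
  exists r2. split; [split; auto|].
  pose proof (Hr2b k Hach) as Hr2k. apply le_INR in Hr2k.
  assert (INR k * chig <= 9 * INR r1).
  { assert (E : 9 * INR r1 / chig * chig = 9 * INR r1) by (field; lra).
    rewrite <- E. apply Rmult_le_compat_r; lra. }
  nra.
Qed.
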